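(* Let $n\ge 2$ and consider the $n$th order ODE $x_n=F(t,x,x_1,\ldots,x_{n-1})$. Suppose there exist smooth functions $z=z(t,x)$ and $\zeta=\zeta(t,x,x_1)$, with $\zeta_{x_1}\neq 0$ and $D_t(z)\neq 0$, such that the equation can be written in terms of $\{z,\zeta,\zeta_1,\ldots,\zeta_{n-1}\}$ as an ODE of order $n-1$, i.e. the submanifold $x_n=F$ coincides (locally) with $\Delta(z,\zeta,\zeta_1,\ldots,\zeta_{n-1})=0$ for some function $\Delta$. Then the pair $(\mathbf{X},\lambda)$ given by $$\mathbf{X}=-z_x(t,x)\,\partial_t+z_t(t,x)\,\partial_x,\qquad \lambda=\frac{z_x\zeta_t-z_t\zeta_x}{D_t(z)\,\zeta_{x_1}}-\frac{D_t(z_t)+D_t(z_x)\,x_1}{D_t(z)}$$ defines a $\lambda$-symmetry of the equation, and $z$ and $\zeta$ are invariants of $\mathbf{X}^{[\lambda,(1)]}$.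
   Context: Coordinates $(t,x,x_1,x_2,\ldots)$ on jet spaces $M^{(k)}$ over an open set $M\subset\mathbb{R}^2$, $x_i=d^ix/dt^i$; all functions smooth. $D_t=\partial_t+x_1\partial_x+x_2\partial_{x_1}+\cdots$ is the total derivative. $\zeta_1=D_t\zeta/D_tz$ and $\zeta_{i+1}=D_t\zeta_i/D_tz$. For $\lambda=\lambda(t,x,x_1)$ and a vector field $\mathbf{X}=\rho(t,x)\partial_t+\phi^0(t,x)\partial_x$, the $k$th order $\lambda$-prolongation is $\mathbf{X}^{[\lambda,(k)]}=\rho\partial_t+\phi^0\partial_x+\sum_{i=1}^k\phi^{[\lambda,(i)]}\partial_{x_i}$, where $\phi^{[\lambda,(0)]}=\phi^0$ and $\phi^{[\lambda,(i)]}=D_t(\phi^{[\lambda,(i-1)]})-D_t(\rho)x_i+\lambda(\phi^{[\lambda,(i-1)]}-\rho x_i)$. $\mathbf{X}$ is a $\lambda$-symmetry of $x_n=F$ (the pair $(\mathbf X,\lambda)$ defines a $\lambda$-symmetry) if $\mathbf{X}^{[\lambda,(n)]}$ is tangent to the submanifold $\{x_n=F\}$, i.e. $\mathbf{X}^{[\lambda,(n)]}(x_n-F)=0$ whenever $x_n=F$. *)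

(* Defs.v *)
From Stdlib Require Import Reals Lra Lia ClassicalEpsilon.
Open Scope R_scope.

(* A function on the (infinite) jet space with coordinates
   (t, x, x_1, x_2, ...): [f t xs] with [xs 0 = x], [xs i = x_i]. *)
Definition Jet := R -> (nat -> R) -> R.

(* the (unique, when it exists) derivative of g at a; 0 otherwise *)
Definition Deriv (g : R -> R) (a : R) : R :=
  epsilon (inhabits 0) (fun l => derivable_pt_lim g a l).

Definition upd (xs : nat -> R) (i : nat) (s : R) : nat -> R :=
  fun j => if Nat.eqb j i then s else xs j.

Definition pt (f : Jet) : Jet := fun t xs => Deriv (fun s => f s xs) t.
Definition px (i : nat) (f : Jet) : Jet :=
  fun t xs => Deriv (fun s => f t (upd xs i s)) (xs i).

Definition jet_order (k : nat) (f : Jet) : Prop :=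
  forall t xs ys, (forall i, (i <= k)%nat -> xs i = ys i) -> f t xs = f t ys.

Definition open_jet (k : nat) (U : R -> (nat -> R) -> Prop) : Prop :=
  forall t xs, U t xs -> exists d, 0 < d /\
    forall t' ys, Rabs (t' - t) < d ->
      (forall i, (i <= k)%nat -> Rabs (ys i - xs i) < d) -> U t' ys.

Definition cont_at (f : Jet) (t : R) (xs : nat -> R) : Prop :=
  forall eps, 0 < eps -> exists d, 0 < d /\
    forall t' ys, Rabs (t' - t) < d -> (forall i, Rabs (ys i - xs i) < d) ->
      Rabs (f t' ys - f t xs) < eps.

CoInductive smooth_on (U : R -> (nat -> R) -> Prop) : Jet -> Prop :=
  smooth_on_intro : forall f : Jet,
    (forall t xs, U t xs -> cont_at f t xs) ->
    (forall t xs, U t xs -> exists l, derivable_pt_lim (fun s => f s xs) t l) ->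
    (forall i t xs, U t xs ->
        exists l, derivable_pt_lim (fun s => f t (upd xs i s)) (xs i) l) ->
    smooth_on U (pt f) ->
    (forall i, smooth_on U (px i f)) ->
    smooth_on U f.

(* Total derivative D_t = d_t + x_1 d_x + x_2 d_{x_1} + ... , truncated after
   x_{K+1} d_{x_K}; this is exact on functions of order <= K. *)
Definition Dt (K : nat) (f : Jet) : Jet :=
  fun t xs => pt f t xs + sum_f_R0 (fun i => xs (S i) * px i f t xs) K.

Fixpoint zeta_seq (K : nat) (z zeta : Jet) (i : nat) : Jet :=
  match i with
  | O => zeta
  | S j => fun t xs => Dt K (zeta_seq K z zeta j) t xs / Dt K z t xs
  end.

(* lambda-prolongation coefficients of X = rho d_t + phi0 d_x:
   phi^(0) = phi0,
   phi^(i+1) = D_t(phi^(i)) - D_t(rho) x_{i+1} + lambda (phi^(i) - rho x_{i+1}) *)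
Fixpoint phi_lam (K : nat) (rho phi0 lam : Jet) (i : nat) : Jet :=
  match i with
  | O => phi0
  | S j => fun t xs =>
      Dt K (phi_lam K rho phi0 lam j) t xs - Dt K rho t xs * xs (S j)
      + lam t xs * (phi_lam K rho phi0 lam j t xs - rho t xs * xs (S j))
  end.

Definition lam_prol (K : nat) (rho phi0 lam : Jet) (k : nat) (f : Jet) : Jet :=
  fun t xs => rho t xs * pt f t xs
    + sum_f_R0 (fun i => phi_lam K rho phi0 lam i t xs * px i f t xs) k.

(* Main.v *)
Require Import Defs.
From Stdlib Require Import Reals Lra Lia ClassicalEpsilon FunctionalExtensionality PropExtensionality Ranalysis5.
From Coquelicot Require Import Coquelicot.
Open Scope R_scope.

Lemma Deriv_eq g a l : derivable_pt_lim g a l -> Deriv g a = l.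
Proof.
  intro H. unfold Deriv. assert (E: exists l, derivable_pt_lim g a l) by eauto.
  pose proof (epsilon_spec (inhabits 0) _ E). eapply uniqueness_limite; eauto.
Qed.

Lemma dpl_loc g h a l d : derivable_pt_lim g a l -> 0 < d ->
  (forall s, Rabs (s - a) < d -> g s = h s) -> derivable_pt_lim h a l.
Proof.
  intros H Hd E eps Heps. destruct (H eps Heps) as [del Hdel].
  assert (H0 : 0 < Rmin del d). { apply Rmin_pos; [apply cond_pos|lra]. }
  exists (mkposreal _ H0). intros x Hx Hxs. simpl in Hxs.
  assert (Hm1 := Rmin_l del d). assert (Hm2 := Rmin_r del d).
  rewrite <- (E (a+x)) by (replace (a+x-a) with x by ring; lra).
  rewrite <- (E a) by (rewrite Rminus_diag, Rabs_R0; lra).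
  apply Hdel; auto. lra.
Qed.

Lemma dpl_ext g h a l : derivable_pt_lim g a l -> (forall s, g s = h s) -> derivable_pt_lim h a l.
Proof. intros H E. apply (dpl_loc g h a l 1); auto; lra. Qed.

Lemma Deriv_loc g h a d : 0 < d -> (forall s, Rabs (s-a) < d -> g s = h s) ->
  Deriv g a = Deriv h a.
Proof.
  intros Hd E. unfold Deriv. f_equal. apply functional_extensionality; intro l.
  apply propositional_extensionality. split; intro; eapply dpl_loc; eauto.
  intros; symmetry; auto.
Qed.

Lemma Deriv_ex g a : (exists l, derivable_pt_lim g a l) -> derivable_pt_lim g a (Deriv g a).
Proof. intros [l Hl]. rewrite (Deriv_eq _ _ _ Hl). exact Hl. Qed.

Lemma Deriv_const c a : Deriv (fun _ => c) a = 0.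
Proof. apply Deriv_eq. apply (dpl_ext (fct_cte c)); [apply derivable_pt_lim_const| reflexivity]. Qed.

(* paths along a coordinate: None = t, Some i = x_i *)
Definition pT (c : option nat) (t s : R) : R := match c with None => s | Some _ => t end.
Definition pX (c : option nat) (xs : nat -> R) (s : R) : nat -> R :=
  match c with None => xs | Some i => upd xs i s end.
Definition bs (c : option nat) (t : R) (xs : nat -> R) : R :=
  match c with None => t | Some i => xs i end.
Definition pd (c : option nat) (f : Jet) : Jet :=
  match c with None => pt f | Some i => px i f end.

Lemma pd_eq c f t xs : pd c f t xs = Deriv (fun s => f (pT c t s) (pX c xs s)) (bs c t xs).
Proof. destruct c; reflexivity. Qed.

Lemma upd_same xs i : upd xs i (xs i) = xs.
Proof. apply functional_extensionality; intro j. unfold upd.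
  destruct (Nat.eqb_spec j i); subst; auto. Qed.

Lemma upd_upd xs i a b : upd (upd xs i a) i b = upd xs i b.
Proof. apply functional_extensionality; intro j. unfold upd.
  destruct (Nat.eqb_spec j i); subst; auto. Qed.

Lemma upd_comm xs i j a b : i <> j -> upd (upd xs i a) j b = upd (upd xs j b) i a.
Proof. intro H. apply functional_extensionality; intro k. unfold upd.
  destruct (Nat.eqb_spec k j); destruct (Nat.eqb_spec k i); subst; auto; lia. Qed.

Lemma upd_eq xs i a : upd xs i a i = a.
Proof. unfold upd. rewrite Nat.eqb_refl. auto. Qed.

Lemma upd_neq xs i j a : j <> i -> upd xs i a j = xs j.
Proof. intro H. unfold upd. destruct (Nat.eqb_spec j i); auto; lia. Qed.

Lemma pT_close c t xs s : Rabs (pT c t s - t) <= Rabs (s - bs c t xs).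
Proof. destruct c; simpl. rewrite Rminus_diag, Rabs_R0. apply Rabs_pos. lra. Qed.

Lemma pX_close c t xs s i : Rabs (pX c xs s i - xs i) <= Rabs (s - bs c t xs).
Proof. destruct c as [j|]; simpl.
  - unfold upd. destruct (Nat.eqb_spec i j); subst. lra.
    rewrite Rminus_diag, Rabs_R0. apply Rabs_pos.
  - rewrite Rminus_diag, Rabs_R0. apply Rabs_pos.
Qed.

Definition wopen (U : R -> (nat -> R) -> Prop) : Prop :=
  forall t xs, U t xs -> exists d, 0 < d /\
    forall t' ys, Rabs (t' - t) < d -> (forall i, Rabs (ys i - xs i) < d) -> U t' ys.

Lemma open_wopen n U : open_jet n U -> wopen U.
Proof. intros H t xs Hu. destruct (H t xs Hu) as [d [Hd Hd2]]. exists d; split; auto. Qed.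

Lemma path_U U c t xs : wopen U -> U t xs -> exists d, 0 < d /\
  forall s, Rabs (s - bs c t xs) < d -> U (pT c t s) (pX c xs s).
Proof.
  intros HU Hu. destruct (HU t xs Hu) as [d [Hd Hd2]]. exists d; split; auto.
  intros s Hs. apply Hd2. eapply Rle_lt_trans; [apply (pT_close c t xs)|auto].
  intro i. eapply Rle_lt_trans; [apply (pX_close c t xs)|auto].
Qed.

Inductive Cl (U : R -> (nat -> R) -> Prop) : Jet -> Prop :=
| ClB f : smooth_on U f -> Cl U f
| ClC c : Cl U (fun _ _ => c)
| ClX j : Cl U (fun _ xs => xs j)
| ClP f g : Cl U f -> Cl U g -> Cl U (fun t xs => f t xs + g t xs)
| ClM f g : Cl U f -> Cl U g -> Cl U (fun t xs => f t xs * g t xs)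
| ClI f : Cl U f -> (forall t xs, U t xs -> f t xs <> 0) -> Cl U (fun t xs => / f t xs)
| ClE f g : Cl U f -> (forall t xs, U t xs -> f t xs = g t xs) -> Cl U g.

Lemma Cl_ex U f cc t xs : wopen U -> Cl U f -> U t xs ->
  exists l, derivable_pt_lim (fun s => f (pT cc t s) (pX cc xs s)) (bs cc t xs) l.
Proof.
  intros HU H. revert cc t xs. induction H; intros cc t xs Hu.
  - destruct H as [f _ H2 H3 _ _]. destruct cc as [i|]; simpl.
    + apply H3; auto.
    + apply H2; auto.
  - exists 0. apply (dpl_ext (fct_cte c)); [apply derivable_pt_lim_const| reflexivity].
  - destruct cc as [i|]; simpl.
    + unfold upd. destruct (Nat.eqb_spec j i).
      * exists 1. apply (dpl_ext id); [apply derivable_pt_lim_id| reflexivity].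
      * exists 0. apply (dpl_ext (fct_cte (xs j))); [apply derivable_pt_lim_const| reflexivity].
    + exists 0. apply (dpl_ext (fct_cte (xs j))); [apply derivable_pt_lim_const| reflexivity].
  - destruct (IHCl1 cc t xs Hu) as [l1 H1]. destruct (IHCl2 cc t xs Hu) as [l2 H2].
    exists (l1 + l2). apply (derivable_pt_lim_plus _ _ _ _ _ H1 H2).
  - destruct (IHCl1 cc t xs Hu) as [l1 H1]. destruct (IHCl2 cc t xs Hu) as [l2 H2].
    eexists. apply (derivable_pt_lim_mult _ _ _ _ _ H1 H2).
  - destruct (IHCl cc t xs Hu) as [l1 H1]. eexists.
    destruct (path_U U cc t xs HU Hu) as [d [Hd Hd2]].
    eapply dpl_loc. apply (derivable_pt_lim_div _ _ _ _ _ (derivable_pt_lim_const 1 _) H1).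
    + destruct cc; simpl; rewrite ?upd_same; apply H0; auto.
    + exact Hd.
    + intros s Hs. unfold div_fct, fct_cte. simpl. field. apply H0. auto.
  - destruct (IHCl cc t xs Hu) as [l1 H1]. exists l1.
    destruct (path_U U cc t xs HU Hu) as [d [Hd Hd2]].
    eapply dpl_loc. exact H1. exact Hd. intros s Hs. apply H0; auto.
Qed.

Lemma Cl_der U f cc t xs : wopen U -> Cl U f -> U t xs ->
  derivable_pt_lim (fun s => f (pT cc t s) (pX cc xs s)) (bs cc t xs) (pd cc f t xs).
Proof. intros. rewrite pd_eq. apply Deriv_ex. apply (Cl_ex U); auto. Qed.

Lemma pd_plus U f g cc t xs : wopen U -> Cl U f -> Cl U g -> U t xs ->
  pd cc (fun t xs => f t xs + g t xs) t xs = pd cc f t xs + pd cc g t xs.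
Proof. intros. rewrite pd_eq. apply Deriv_eq.
  apply (derivable_pt_lim_plus _ _ _ _ _ (Cl_der U f cc t xs H H0 H2) (Cl_der U g cc t xs H H1 H2)). Qed.

Lemma pt_path_base cc t xs : pT cc t (bs cc t xs) = t.
Proof. destruct cc; reflexivity. Qed.
Lemma pX_path_base cc t xs : pX cc xs (bs cc t xs) = xs.
Proof. destruct cc; simpl; auto using upd_same. Qed.

Lemma pd_mult U f g cc t xs : wopen U -> Cl U f -> Cl U g -> U t xs ->
  pd cc (fun t xs => f t xs * g t xs) t xs = pd cc f t xs * g t xs + f t xs * pd cc g t xs.
Proof. intros. rewrite pd_eq. apply Deriv_eq.
  pose proof (derivable_pt_lim_mult _ _ _ _ _ (Cl_der U f cc t xs H H0 H2) (Cl_der U g cc t xs H H1 H2)).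
  cbv beta in H3. rewrite pt_path_base, pX_path_base in H3. exact H3. Qed.

Lemma pd_inv U f cc t xs : wopen U -> Cl U f -> (forall t xs, U t xs -> f t xs <> 0) -> U t xs ->
  pd cc (fun t xs => / f t xs) t xs = (-1 * pd cc f t xs) * (/ f t xs * / f t xs).
Proof. intros HU Hf Hnz Hu. rewrite pd_eq. apply Deriv_eq.
  destruct (path_U U cc t xs HU Hu) as [d [Hd Hd2]].
  assert (NZ : f (pT cc t (bs cc t xs)) (pX cc xs (bs cc t xs)) <> 0).
  { rewrite pt_path_base, pX_path_base; auto. }
  pose proof (derivable_pt_lim_div _ _ _ _ _ (derivable_pt_lim_const 1 _) (Cl_der U f cc t xs HU Hf Hu) NZ) as H.
  cbv beta in H. rewrite pt_path_base, pX_path_base in H. unfold fct_cte in H.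
  replace (-1 * pd cc f t xs * (/ f t xs * / f t xs)) with ((0 * f t xs - pd cc f t xs * 1) / (f t xs)²)
    by (unfold Rsqr; field; auto).
  eapply dpl_loc; [exact H | exact Hd |].
  intros s Hs. unfold div_fct, fct_cte. field. apply Hnz. auto.
Qed.

Lemma pd_const cc (a : R) t xs : pd cc (fun _ _ => a) t xs = 0.
Proof. rewrite pd_eq. apply Deriv_const. Qed.

Definition dcoord (cc : option nat) (j : nat) : R :=
  match cc with None => 0 | Some i => if Nat.eqb j i then 1 else 0 end.

Lemma pd_coord cc j t xs : pd cc (fun _ xs => xs j) t xs = dcoord cc j.
Proof. rewrite pd_eq. destruct cc as [i|]; simpl.
  - unfold upd. destruct (Nat.eqb_spec j i).
    + apply Deriv_eq. apply (dpl_ext id); [apply derivable_pt_lim_id| reflexivity].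
    + apply Deriv_const.
  - apply Deriv_const.
Qed.

Lemma pd_ext U f g cc t xs : wopen U -> (forall t xs, U t xs -> f t xs = g t xs) -> U t xs ->
  pd cc f t xs = pd cc g t xs.
Proof. intros HU E Hu. rewrite !pd_eq. destruct (path_U U cc t xs HU Hu) as [d [Hd Hd2]].
  apply (Deriv_loc _ _ _ d Hd). intros; apply E; auto. Qed.

Lemma Cl_pd U f cc : wopen U -> Cl U f -> Cl U (pd cc f).
Proof.
  intros HU H. revert cc. induction H; intros cc.
  - destruct H as [f _ _ _ H4 H5]. destruct cc; simpl; apply ClB; auto.
  - apply (ClE U (fun _ _ => 0)). apply ClC. intros; rewrite pd_const; auto.
  - apply (ClE U (fun _ _ => dcoord cc j)). apply ClC. intros; rewrite pd_coord; auto.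
  - eapply ClE. apply (ClP U _ _ (IHCl1 cc) (IHCl2 cc)). intros; rewrite (pd_plus U); auto.
  - eapply ClE. apply (ClP U _ _ (ClM U _ _ (IHCl1 cc) H0) (ClM U _ _ H (IHCl2 cc))).
    intros; rewrite (pd_mult U); auto.
  - eapply ClE. apply (ClM U _ _ (ClM U _ _ (ClC U (-1)) (IHCl cc)) (ClM U _ _ (ClI U _ H H0) (ClI U _ H H0))).
    intros; rewrite (pd_inv U); auto.
  - eapply ClE. apply (IHCl cc). intros. apply (pd_ext U); auto.
Qed.


Lemma cont_op2 (op : R -> R -> R) f g t xs : cont_at f t xs -> cont_at g t xs ->
  continuity_2d_pt op (f t xs) (g t xs) ->
  cont_at (fun t xs => op (f t xs) (g t xs)) t xs.
Proof.
  intros Hf Hg Hop eps Heps. destruct (Hop (mkposreal _ Heps)) as [del Hdel].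
  destruct (Hf del (cond_pos del)) as [d1 [Hd1 H1]].
  destruct (Hg del (cond_pos del)) as [d2 [Hd2 H2]].
  exists (Rmin d1 d2). split. apply Rmin_pos; auto.
  intros t' ys Ht Hy. assert (Hm1 := Rmin_l d1 d2). assert (Hm2 := Rmin_r d1 d2).
  apply (Hdel (f t' ys) (g t' ys)).
  - apply H1. lra. intro i. specialize (Hy i). lra.
  - apply H2. lra. intro i. specialize (Hy i). lra.
Qed.

Lemma Cl_cont U f t xs : wopen U -> Cl U f -> U t xs -> cont_at f t xs.
Proof.
  intros HU H. revert t xs. induction H; intros t xs Hu.
  - destruct H as [f H1 _ _ _ _]. auto.
  - intros eps Heps. exists 1. split. lra. intros. rewrite Rminus_diag, Rabs_R0. auto.
  - intros eps Heps. exists eps. split. auto. intros. auto.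
  - apply (cont_op2 (fun u v => u + v)); auto.
    apply (continuity_2d_pt_plus (fun u _ => u) (fun _ v => v));
      [apply continuity_2d_pt_id1 | apply continuity_2d_pt_id2].
  - apply (cont_op2 (fun u v => u * v)); auto.
    apply (continuity_2d_pt_mult (fun u _ => u) (fun _ v => v));
      [apply continuity_2d_pt_id1 | apply continuity_2d_pt_id2].
  - apply (cont_op2 (fun u v => / u) f f); auto.
    apply (continuity_2d_pt_inv (fun u _ => u)); [apply continuity_2d_pt_id1 | apply H0; auto].
  - intros eps Heps. destruct (HU t xs Hu) as [d0 [Hd0 H0']].
    destruct (IHCl t xs Hu eps Heps) as [d1 [Hd1 H1]].
    exists (Rmin d0 d1). split. apply Rmin_pos; auto.
    intros t' ys Ht Hy. assert (Hm1 := Rmin_l d0 d1). assert (Hm2 := Rmin_r d0 d1).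
    rewrite <- !H0. apply H1. lra. intro i; specialize (Hy i); lra. auto.
    apply H0'. lra. intro i; specialize (Hy i); lra.
Qed.

Definition QT (c1 c2 : option nat) t (u v : R) := pT c2 (pT c1 t u) v.
Definition QX (c1 c2 : option nat) xs (u v : R) := pX c2 (pX c1 xs u) v.

Lemma Q_base c1 c2 t xs : c1 <> c2 ->
  QT c1 c2 t (bs c1 t xs) (bs c2 t xs) = t /\ QX c1 c2 xs (bs c1 t xs) (bs c2 t xs) = xs.
Proof. intro H. unfold QT, QX. destruct c1 as [i|]; destruct c2 as [j|]; simpl; try congruence;
  rewrite ?upd_same; auto. Qed.

Ltac updtac := unfold upd; repeat match goal with |- context [Nat.eqb ?a ?b] => destruct (Nat.eqb_spec a b) end;
  subst; try congruence; try lia; auto.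

Lemma Q_c2 c1 c2 t xs u v w : c1 <> c2 ->
  pT c2 (QT c1 c2 t u v) w = QT c1 c2 t u w /\ pX c2 (QX c1 c2 xs u v) w = QX c1 c2 xs u w
  /\ bs c2 (QT c1 c2 t u v) (QX c1 c2 xs u v) = v.
Proof. intro H. unfold QT, QX. destruct c1 as [i|]; destruct c2 as [j|]; simpl; try congruence;
  (split; [|split]); auto; try (apply functional_extensionality; intro k); updtac. Qed.

Lemma Q_c1 c1 c2 t xs u v w : c1 <> c2 ->
  pT c1 (QT c1 c2 t u v) w = QT c1 c2 t w v /\ pX c1 (QX c1 c2 xs u v) w = QX c1 c2 xs w v
  /\ bs c1 (QT c1 c2 t u v) (QX c1 c2 xs u v) = u.
Proof. intro H. unfold QT, QX. destruct c1 as [i|]; destruct c2 as [j|]; simpl; try congruence;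
  (split; [|split]); auto; try (apply functional_extensionality; intro k); updtac. Qed.

Lemma Q_close c1 c2 t xs u v : c1 <> c2 ->
  Rabs (QT c1 c2 t u v - t) <= Rabs (u - bs c1 t xs) + Rabs (v - bs c2 t xs) /\
  forall i, Rabs (QX c1 c2 xs u v i - xs i) <= Rabs (u - bs c1 t xs) + Rabs (v - bs c2 t xs).
Proof. intro H. unfold QT, QX. assert (A1 := Rabs_pos (u - bs c1 t xs)). assert (A2 := Rabs_pos (v - bs c2 t xs)).
  split; [|intro k]; destruct c1 as [i|]; destruct c2 as [j|]; simpl in *; try congruence;
  try (rewrite Rminus_diag, Rabs_R0; lra); try lra; updtac;
  try (rewrite Rminus_diag, Rabs_R0; lra); try lra.
Qed.

Lemma chart_der2 U g c1 c2 t xs u v : wopen U -> Cl U g -> c1 <> c2 ->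
  U (QT c1 c2 t u v) (QX c1 c2 xs u v) ->
  derivable_pt_lim (fun w => g (QT c1 c2 t u w) (QX c1 c2 xs u w)) v
    (pd c2 g (QT c1 c2 t u v) (QX c1 c2 xs u v)).
Proof. intros HU Hg Hc Hu. pose proof (Cl_der U g c2 _ _ HU Hg Hu) as H.
  destruct (Q_c2 c1 c2 t xs u v v Hc) as [_ [_ E]]. rewrite E in H.
  eapply dpl_ext. exact H. intro w. destruct (Q_c2 c1 c2 t xs u v w Hc) as [E1 [E2 _]].
  rewrite E1, E2. auto. Qed.

Lemma chart_der1 U g c1 c2 t xs u v : wopen U -> Cl U g -> c1 <> c2 ->
  U (QT c1 c2 t u v) (QX c1 c2 xs u v) ->
  derivable_pt_lim (fun w => g (QT c1 c2 t w v) (QX c1 c2 xs w v)) u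
    (pd c1 g (QT c1 c2 t u v) (QX c1 c2 xs u v)).
Proof. intros HU Hg Hc Hu. pose proof (Cl_der U g c1 _ _ HU Hg Hu) as H.
  destruct (Q_c1 c1 c2 t xs u v v Hc) as [_ [_ E]]. rewrite E in H.
  eapply dpl_ext. exact H. intro w. destruct (Q_c1 c1 c2 t xs u v w Hc) as [E1 [E2 _]].
  rewrite E1, E2. auto. Qed.

Lemma Q_U U c1 c2 t xs : wopen U -> U t xs -> c1 <> c2 -> exists del, 0 < del /\
  forall u v, Rabs (u - bs c1 t xs) < del -> Rabs (v - bs c2 t xs) < del ->
    U (QT c1 c2 t u v) (QX c1 c2 xs u v).
Proof. intros HU Hu Hc. destruct (HU t xs Hu) as [d [Hd H]]. exists (d/2). split. lra.
  intros u v H1 H2. destruct (Q_close c1 c2 t xs u v Hc) as [A B]. apply H.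
  lra. intro i. specialize (B i). lra. Qed.

Lemma Derive_dpl g a l : derivable_pt_lim g a l -> Derive g a = l.
Proof. intro H. apply is_derive_unique. apply is_derive_Reals. exact H. Qed.

Lemma ex_derive_dpl g a l : derivable_pt_lim g a l -> ex_derive g a.
Proof. intro H. exists l. apply is_derive_Reals. exact H. Qed.

Lemma loc_ball a r (P : R -> Prop) : 0 < r -> (forall z, Rabs (z - a) < r -> P z) -> locally a P.
Proof. intros Hr H. exists (mkposreal r Hr). intros z Hz. apply H. exact Hz. Qed.

Lemma Q_cont U h c1 c2 t xs : wopen U -> Cl U h -> U t xs -> c1 <> c2 ->
  continuity_2d_pt (fun u v => h (QT c1 c2 t u v) (QX c1 c2 xs u v)) (bs c1 t xs) (bs c2 t xs).
Proof. intros HU Hh Hu Hc eps. destruct (Cl_cont U h t xs HU Hh Hu eps (cond_pos eps)) as [d [Hd H]].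
  assert (Hd2 : 0 < d/2) by lra. exists (mkposreal _ Hd2). simpl. intros u v H1 H2.
  destruct (Q_base c1 c2 t xs Hc) as [E1 E2]. rewrite E1, E2.
  destruct (Q_close c1 c2 t xs u v Hc) as [A B]. apply H. lra. intro i; specialize (B i); lra. Qed.

Lemma Cl_schwarz U f c1 c2 t xs : wopen U -> Cl U f -> U t xs ->
  pd c1 (pd c2 f) t xs = pd c2 (pd c1 f) t xs.
Proof.
  intros HU Hf Hu.
  assert (Hdec : {c1 = c2} + {c1 <> c2}) by (decide equality; apply Nat.eq_dec).
  destruct Hdec as [E|Hc]. { subst; reflexivity. }
  set (x := bs c1 t xs). set (y := bs c2 t xs).
  set (F2 := fun u v => f (QT c1 c2 t u v) (QX c1 c2 xs u v)).
  destruct (Q_U U c1 c2 t xs HU Hu Hc) as [del [Hdel HQ]]. fold x y in HQ.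
  assert (D2 : forall u v, Rabs (u - x) < del -> Rabs (v - y) < del ->
     Derive (fun w => F2 u w) v = pd c2 f (QT c1 c2 t u v) (QX c1 c2 xs u v)).
  { intros. apply Derive_dpl. apply (chart_der2 U); auto. }
  assert (D1 : forall u v, Rabs (u - x) < del -> Rabs (v - y) < del ->
     Derive (fun w => F2 w v) u = pd c1 f (QT c1 c2 t u v) (QX c1 c2 xs u v)).
  { intros. apply Derive_dpl. apply (chart_der1 U); auto. }
  assert (L2 : forall u v, Rabs (u - x) < del -> Rabs (v - y) < del ->
     locally u (fun z => Derive (fun w => F2 z w) v = pd c2 f (QT c1 c2 t z v) (QX c1 c2 xs z v))).
  { intros u v Hu1 Hv1. apply (loc_ball u (del - Rabs (u - x))). lra.
    intros z Hz. apply D2; auto. assert (Rabs (z - x) <= Rabs (z - u) + Rabs (u - x)).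
    { replace (z - x) with ((z - u) + (u - x)) by ring. apply Rabs_triang. } lra. }
  assert (L1 : forall u v, Rabs (u - x) < del -> Rabs (v - y) < del ->
     locally v (fun z => Derive (fun w => F2 w z) u = pd c1 f (QT c1 c2 t u z) (QX c1 c2 xs u z))).
  { intros u v Hu1 Hv1. apply (loc_ball v (del - Rabs (v - y))). lra.
    intros z Hz. apply D1; auto. assert (Rabs (z - y) <= Rabs (z - v) + Rabs (v - y)).
    { replace (z - y) with ((z - v) + (v - y)) by ring. apply Rabs_triang. } lra. }
  assert (M1 : forall u v, Rabs (u - x) < del -> Rabs (v - y) < del ->
     Derive (fun z => Derive (fun w => F2 z w) v) u
       = pd c1 (pd c2 f) (QT c1 c2 t u v) (QX c1 c2 xs u v)).
  { intros u v Hu1 Hv1. etransitivity. apply Derive_ext_loc. exact (L2 u v Hu1 Hv1).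
    apply Derive_dpl. apply (chart_der1 U); auto. apply Cl_pd; auto. }
  assert (M2 : forall u v, Rabs (u - x) < del -> Rabs (v - y) < del ->
     Derive (fun z => Derive (fun w => F2 w z) u) v
       = pd c2 (pd c1 f) (QT c1 c2 t u v) (QX c1 c2 xs u v)).
  { intros u v Hu1 Hv1. etransitivity. apply Derive_ext_loc. exact (L1 u v Hu1 Hv1).
    apply Derive_dpl. apply (chart_der2 U); auto. apply Cl_pd; auto. }
  assert (HS := Schwarz F2 x y).
  assert (Rabs (x - x) < del) by (rewrite Rminus_diag, Rabs_R0; lra).
  assert (Rabs (y - y) < del) by (rewrite Rminus_diag, Rabs_R0; lra).
  rewrite (M1 x y), (M2 x y) in HS by auto.
  destruct (Q_base c1 c2 t xs Hc) as [E1 E2]. fold x y in E1, E2. rewrite E1, E2 in HS.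
  apply HS.
  - exists (mkposreal del Hdel). simpl. intros u v Hu1 Hv1. repeat split.
    + eapply ex_derive_dpl. apply (chart_der1 U); auto.
    + eapply ex_derive_dpl. apply (chart_der2 U); auto.
    + eapply ex_derive_ext_loc. apply (filter_imp _ _ (fun z H => eq_sym H) (L2 u v Hu1 Hv1)).
      eapply ex_derive_dpl. apply (chart_der1 U); auto. apply Cl_pd; auto.
    + eapply ex_derive_ext_loc. apply (filter_imp _ _ (fun z H => eq_sym H) (L1 u v Hu1 Hv1)).
      eapply ex_derive_dpl. apply (chart_der2 U); auto. apply Cl_pd; auto.
  - eapply continuity_2d_pt_ext_loc.
    2: apply (Q_cont U (pd c1 (pd c2 f)) c1 c2 t xs HU); auto; repeat apply Cl_pd; auto.
    exists (mkposreal del Hdel). simpl. intros u v Hu1 Hv1. symmetry. apply M1; auto.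
  - eapply continuity_2d_pt_ext_loc.
    2: apply (Q_cont U (pd c2 (pd c1 f)) c1 c2 t xs HU); auto; repeat apply Cl_pd; auto.
    exists (mkposreal del Hdel). simpl. intros u v Hu1 Hv1. symmetry. apply M2; auto.
Qed.

Definition sumJ (g : nat -> Jet) (K : nat) : Jet := fun t xs => sum_f_R0 (fun i => g i t xs) K.

Lemma Cl_sum U g K : (forall i, Cl U (g i)) -> Cl U (sumJ g K).
Proof. intro H. induction K.
  - apply (ClE U (g 0%nat)); [apply H| intros; reflexivity].
  - apply (ClE U (fun t xs => sumJ g K t xs + g (S K) t xs)). apply ClP; auto.
    intros; unfold sumJ; simpl; reflexivity.
Qed.

Lemma pd_sum U g K cc t xs : wopen U -> (forall i, Cl U (g i)) -> U t xs ->
  pd cc (sumJ g K) t xs = sum_f_R0 (fun i => pd cc (g i) t xs) K.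
Proof. intros HU H Hu. induction K as [|K IHK].
  - simpl. apply (pd_ext U _ _ _ _ _ HU); [intros; reflexivity | exact Hu].
  - transitivity (pd cc (fun t xs => sumJ g K t xs + g (S K) t xs) t xs).
    { apply (pd_ext U _ _ _ _ _ HU); [intros; reflexivity | exact Hu]. }
    rewrite (pd_plus U); auto using Cl_sum. rewrite IHK. reflexivity.
Qed.

Lemma Cl_Dt U f K : wopen U -> Cl U f -> Cl U (Dt K f).
Proof. intros HU H.
  apply (ClE U (fun t xs => pd None f t xs + sumJ (fun i t xs => xs (S i) * pd (Some i) f t xs) K t xs)).
  - apply ClP. apply Cl_pd; auto. apply Cl_sum. intro i. apply ClM. apply ClX. apply Cl_pd; auto.
  - intros; reflexivity.
Qed.

Lemma pd_Dt U f K cc t xs : wopen U -> Cl U f -> U t xs ->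
  pd cc (Dt K f) t xs = pd cc (pt f) t xs +
    sum_f_R0 (fun i => dcoord cc (S i) * px i f t xs + xs (S i) * pd cc (px i f) t xs) K.
Proof. intros HU H Hu.
  assert (E : pd cc (Dt K f) t xs = pd cc (fun t xs => pd None f t xs + sumJ (fun i t xs => xs (S i) * pd (Some i) f t xs) K t xs) t xs).
  { apply (pd_ext U _ _ _ _ _ HU); [intros; reflexivity| exact Hu]. }
  assert (C1 : Cl U (pd None f)) by (apply Cl_pd; auto).
  assert (C2 : forall i, Cl U (fun t xs => xs (S i) * pd (Some i) f t xs)).
  { intro i; apply ClM; [apply ClX| apply Cl_pd; auto]. }
  assert (C3 : Cl U (sumJ (fun i t xs => xs (S i) * pd (Some i) f t xs) K)) by (apply Cl_sum; auto).
  rewrite E. rewrite (pd_plus U) by auto.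
  f_equal. rewrite (pd_sum U) by auto.
  apply sum_eq. intros i _. assert (C4 : Cl U (pd (Some i) f)) by (apply Cl_pd; auto).
  rewrite (pd_mult U) by (auto using ClX).
  rewrite pd_coord. reflexivity.
Qed.

Lemma jet_order_mono k k' f : (k <= k')%nat -> jet_order k f -> jet_order k' f.
Proof. intros Hk H t xs ys E. apply H. intros; apply E; lia. Qed.

Lemma px_high k f i t xs : jet_order k f -> (k < i)%nat -> px i f t xs = 0.
Proof. intros H Hi. unfold px.
  assert (E : (fun s => f t (upd xs i s)) = (fun _ => f t xs)).
  { apply functional_extensionality; intro s. apply H. intros j Hj. rewrite upd_neq; auto; lia. }
  rewrite E. apply Deriv_const. Qed.

Lemma jet_order_pd k f cc : jet_order k f -> jet_order k (pd cc f).
Proof. intros H t xs ys E. destruct cc as [i|]; simpl.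
  - destruct (Compare_dec.le_lt_dec i k) as [Hi|Hi].
    + unfold px. rewrite (E i Hi). f_equal. apply functional_extensionality; intro s.
      apply H. intros j Hj. unfold upd. destruct (Nat.eqb j i); auto.
    + rewrite !(px_high k f i); auto.
  - unfold pt. f_equal. apply functional_extensionality; intro s. apply H; auto.
Qed.

Lemma jet_order_Dt k K f : jet_order k f -> jet_order (S k) (Dt K f).
Proof. intros H t xs ys E. unfold Dt.
  assert (E0 : pt f t xs = pt f t ys) by (apply (jet_order_pd k f None H t xs ys); intros; apply E; lia).
  rewrite E0. f_equal.
  apply sum_eq. intros i _. destruct (Compare_dec.le_lt_dec i k) as [Hi|Hi].
    + rewrite (E (S i)) by lia.
      assert (E1 : px i f t xs = px i f t ys) by (apply (jet_order_pd k f (Some i) H t xs ys); intros; apply E; lia).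
      rewrite E1. reflexivity.
    + rewrite !(px_high k f i); auto. ring.
Qed.

Lemma Cl_minus U f g : Cl U f -> Cl U g -> Cl U (fun t xs => f t xs - g t xs).
Proof. intros. apply (ClE U (fun t xs => f t xs + (fun _ _ => -1) t xs * g t xs)).
  apply ClP; auto. apply ClM; auto. apply ClC. intros; simpl; ring. Qed.

Lemma Cl_phi U n rho phi0 lam i : wopen U -> Cl U rho -> Cl U phi0 -> Cl U lam ->
  Cl U (phi_lam n rho phi0 lam i).
Proof. intros HU H1 H2 H3. induction i; simpl; auto.
  apply ClP. apply Cl_minus. apply Cl_Dt; auto. apply ClM. apply Cl_Dt; auto. apply ClX.
  apply ClM; auto. apply Cl_minus; auto. apply ClM; auto. apply ClX.
Qed.

Lemma pd_LP U n rho phi0 lam k f cc t xs : wopen U -> Cl U rho -> Cl U phi0 -> Cl U lam -> Cl U f -> U t xs ->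
  pd cc (lam_prol n rho phi0 lam k f) t xs =
    pd cc rho t xs * pt f t xs + rho t xs * pd cc (pt f) t xs +
    sum_f_R0 (fun j => pd cc (phi_lam n rho phi0 lam j) t xs * px j f t xs
                      + phi_lam n rho phi0 lam j t xs * pd cc (px j f) t xs) k.
Proof. intros HU H1 H2 H3 Hf Hu.
  assert (CP := fun j => Cl_phi U n rho phi0 lam j HU H1 H2 H3).
  assert (C1 : Cl U (pd None f)) by (apply Cl_pd; auto).
  assert (C2 : forall j, Cl U (fun t xs => phi_lam n rho phi0 lam j t xs * pd (Some j) f t xs)).
  { intro j. apply ClM; auto. apply Cl_pd; auto. }
  assert (C3 : Cl U (sumJ (fun j t xs => phi_lam n rho phi0 lam j t xs * pd (Some j) f t xs) k)) by (apply Cl_sum; auto).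
  assert (C4 : Cl U (fun t xs => rho t xs * pd None f t xs)) by (apply ClM; auto).
  transitivity (pd cc (fun t xs => (fun t xs => rho t xs * pd None f t xs) t xs +
     sumJ (fun j t xs => phi_lam n rho phi0 lam j t xs * pd (Some j) f t xs) k t xs) t xs).
  { apply (pd_ext U _ _ _ _ _ HU); [intros; reflexivity| exact Hu]. }
  rewrite (pd_plus U) by auto. rewrite (pd_mult U) by auto. rewrite (pd_sum U) by auto.
  f_equal. apply sum_eq. intros j _. rewrite (pd_mult U) by (auto; apply Cl_pd; auto). reflexivity.
Qed.

Lemma sum_exch (g : nat -> nat -> R) N M :
  sum_f_R0 (fun j => sum_f_R0 (fun i => g i j) N) M = sum_f_R0 (fun i => sum_f_R0 (fun j => g i j) M) N.
Proof. induction M; simpl.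
  - reflexivity.
  - rewrite IHM. rewrite <- sum_plus. reflexivity.
Qed.

Lemma sum_scal_l c (a : nat -> R) N : c * sum_f_R0 a N = sum_f_R0 (fun i => c * a i) N.
Proof. induction N; simpl. reflexivity. rewrite <- IHN. ring. Qed.

Lemma sum_delta (a : nat -> R) k N :
  sum_f_R0 (fun j => a j * (if Nat.eqb k j then 1 else 0)) N = if Nat.leb k N then a k else 0.
Proof. induction N; simpl.
  - destruct k; simpl; ring.
  - rewrite IHN. destruct (Nat.eqb_spec k (S N)).
    + subst. rewrite (proj2 (Nat.leb_nle (S N) N)) by lia. rewrite Nat.leb_refl. ring.
    + destruct (Nat.leb_spec k N); destruct (Nat.leb_spec k (S N)); try lia; ring.
Qed.

Lemma sum_zero (a : nat -> R) N : (forall i, (i <= N)%nat -> a i = 0) -> sum_f_R0 a N = 0.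
Proof. intro H. rewrite (sum_eq a (fun _ => 0)) by auto. clear. induction N; simpl; auto. rewrite IHN; ring. Qed.

Lemma commutator U n rho phi0 lam f m t xs :
  wopen U -> Cl U rho -> Cl U phi0 -> Cl U lam -> Cl U f -> jet_order m f -> (m < n)%nat -> U t xs ->
  (forall t xs, U t xs -> lam_prol n rho phi0 lam n f t xs = 0) ->
  lam_prol n rho phi0 lam n (Dt n f) t xs = - (Dt n rho t xs + lam t xs * rho t xs) * Dt n f t xs.
Proof.
  intros HU H1 H2 H3 Hf Hm Hmn Hu HX.
  set (P := fun j => phi_lam n rho phi0 lam j).
  assert (CP : forall j, Cl U (P j)) by (intro j; apply Cl_phi; auto).
  assert (Hz : forall cc, pd cc (lam_prol n rho phi0 lam n f) t xs = 0).
  { intro cc. rewrite (pd_ext U _ (fun _ _ => 0) cc t xs HU); auto. apply pd_const. }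
  assert (SW1 : forall i, px i (pt f) t xs = pt (px i f) t xs).
  { intro i. apply (Cl_schwarz U f (Some i) None); auto. }
  assert (SW2 : forall i j, px i (px j f) t xs = px j (px i f) t xs).
  { intros i j. apply (Cl_schwarz U f (Some i) (Some j)); auto. }
  assert (FN : px n f t xs = 0) by (apply (px_high m); auto).
  set (AT := pt (pt f) t xs).
  set (SA := sum_f_R0 (fun i => xs (S i) * pt (px i f) t xs) n).
  set (S1 := sum_f_R0 (fun j => P j t xs * pt (px j f) t xs) n).
  set (S2 := sum_f_R0 (fun i => px i f t xs * (Dt n (P i) t xs - Dt n rho t xs * xs (S i) + lam t xs * (P i t xs - rho t xs * xs (S i)))) n).
  set (S3 := sum_f_R0 (fun i => xs (S i) * sum_f_R0 (fun j => P j t xs * px i (px j f) t xs) n) n).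
  set (T1 := sum_f_R0 (fun j => pt (P j) t xs * px j f t xs) n).
  set (T2 := sum_f_R0 (fun j => px j f t xs * sum_f_R0 (fun i => xs (S i) * px i (P j) t xs) n) n).
  set (RX := sum_f_R0 (fun i => xs (S i) * px i rho t xs) n).
  set (SX := sum_f_R0 (fun i => xs (S i) * px i f t xs) n).
  set (SP := sum_f_R0 (fun j => P j t xs * px j f t xs) n).
  assert (E_X : rho t xs * pt f t xs + SP = 0) by (apply HX; auto).
  assert (E_N : pt rho t xs * pt f t xs + rho t xs * AT + T1 + S1 = 0).
  { rewrite <- (Hz None). rewrite (pd_LP U) by auto. simpl. unfold T1, S1, AT.
    rewrite sum_plus. change (phi_lam n rho phi0 lam) with P. ring. }
  assert (E_Q : pt f t xs * RX + rho t xs * SA + T2 + S3 = 0).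
  { transitivity (sum_f_R0 (fun i => xs (S i) * pd (Some i) (lam_prol n rho phi0 lam n f) t xs) n).
    2:{ apply sum_zero. intros i _. rewrite Hz. ring. }
    rewrite (sum_eq _ (fun i => pt f t xs * (xs (S i) * px i rho t xs) + rho t xs * (xs (S i) * pt (px i f) t xs)
       + sum_f_R0 (fun j => xs (S i) * px i (P j) t xs * px j f t xs) n
       + xs (S i) * sum_f_R0 (fun j => P j t xs * px i (px j f) t xs) n)).
    2:{ intros i _. rewrite (pd_LP U) by auto. simpl. change (phi_lam n rho phi0 lam) with P. rewrite SW1.
        rewrite sum_plus.
        rewrite (sum_eq (fun j => xs (S i) * px i (P j) t xs * px j f t xs) (fun j => xs (S i) * (px i (P j) t xs * px j f t xs))) by (intros; ring).
        rewrite <- sum_scal_l. ring. }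
    rewrite !sum_plus. rewrite <- !sum_scal_l. unfold RX, SA, S3, T2. f_equal. f_equal.
    rewrite sum_exch. apply sum_eq; intros j _. rewrite sum_scal_l. apply sum_eq; intros; ring. }
  assert (E_S2 : S2 = T1 + T2 - Dt n rho t xs * SX + lam t xs * SP - lam t xs * rho t xs * SX).
  { unfold S2, T1, T2, SX, SP. rewrite !sum_scal_l.
    repeat first [rewrite <- sum_plus | rewrite <- minus_sum].
    apply sum_eq. intros i _. unfold Dt at 1. ring. }
  assert (E_L : lam_prol n rho phi0 lam n (Dt n f) t xs = rho t xs * (AT + SA) + S1 + S2 + S3).
  { unfold lam_prol. change (phi_lam n rho phi0 lam) with P.
    assert (L0 := pd_Dt U f n None t xs HU Hf Hu). cbv beta iota delta [pd dcoord] in L0. rewrite L0.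
    rewrite (sum_eq (fun i => 0 * px i f t xs + xs (S i) * pt (px i f) t xs) (fun i => xs (S i) * pt (px i f) t xs))
      by (intros; ring). fold SA. fold AT.
    rewrite (sum_eq _ (fun j => P j t xs * pt (px j f) t xs +
      (sum_f_R0 (fun i => P j t xs * ((if Nat.eqb (S i) j then 1 else 0) * px i f t xs)) n +
       sum_f_R0 (fun i => xs (S i) * (P j t xs * px i (px j f) t xs)) n))).
    2:{ intros j _. assert (L1 := pd_Dt U f n (Some j) t xs HU Hf Hu). cbv beta iota delta [pd dcoord] in L1. rewrite L1. rewrite SW1.
        rewrite Rmult_plus_distr_l. f_equal. rewrite sum_scal_l. rewrite <- sum_plus.
        apply sum_eq. intros i _. rewrite (SW2 j i). ring. }
    rewrite !sum_plus. fold S1.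
    rewrite (sum_exch (fun i j => xs (S i) * (P j t xs * px i (px j f) t xs))).
    rewrite (sum_exch (fun i j => P j t xs * ((if Nat.eqb (S i) j then 1 else 0) * px i f t xs))).
    assert (A2 : sum_f_R0 (fun i => sum_f_R0 (fun j => P j t xs * ((if S i =? j then 1 else 0) * px i f t xs)) n) n = S2).
    { unfold S2. apply sum_eq. intros i Hi.
      rewrite (sum_eq _ (fun j => px i f t xs * (P j t xs * (if S i =? j then 1 else 0)))) by (intros; ring).
      rewrite <- sum_scal_l. rewrite sum_delta. destruct (Nat.leb_spec (S i) n).
      - reflexivity.
      - assert (i = n) by lia. subst. rewrite FN. ring. }
    assert (A3 : sum_f_R0 (fun i => sum_f_R0 (fun j => xs (S i) * (P j t xs * px i (px j f) t xs)) n) n = S3).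
    { unfold S3. apply sum_eq. intros i _. rewrite sum_scal_l. reflexivity. }
    rewrite A2, A3. ring. }
  rewrite E_L, E_S2. unfold Dt. fold RX SX.
  replace SP with (- (rho t xs * pt f t xs)) by lra. lra.
Qed.

Lemma sum_scal_r c (a : nat -> R) N : sum_f_R0 a N * c = sum_f_R0 (fun i => a i * c) N.
Proof. induction N; simpl. reflexivity. rewrite <- IHN. ring. Qed.

Lemma LP_mult U n rho phi0 lam k g h t xs : wopen U -> Cl U g -> Cl U h -> U t xs ->
  lam_prol n rho phi0 lam k (fun t xs => g t xs * h t xs) t xs =
  lam_prol n rho phi0 lam k g t xs * h t xs + g t xs * lam_prol n rho phi0 lam k h t xs.
Proof. intros HU Hg Hh Hu. unfold lam_prol.
  assert (E0 := pd_mult U g h None t xs HU Hg Hh Hu). simpl in E0. rewrite E0.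
  rewrite (sum_eq _ (fun i => (phi_lam n rho phi0 lam i t xs * px i g t xs) * h t xs +
     g t xs * (phi_lam n rho phi0 lam i t xs * px i h t xs))).
  2:{ intros i _. assert (E1 := pd_mult U g h (Some i) t xs HU Hg Hh Hu). simpl in E1. rewrite E1. ring. }
  rewrite sum_plus.
  rewrite <- (sum_scal_r (h t xs) (fun i => phi_lam n rho phi0 lam i t xs * px i g t xs)).
  rewrite <- (sum_scal_l (g t xs) (fun i => phi_lam n rho phi0 lam i t xs * px i h t xs)). ring.
Qed.

Lemma LP_inv U n rho phi0 lam k h t xs : wopen U -> Cl U h -> (forall t xs, U t xs -> h t xs <> 0) -> U t xs ->
  lam_prol n rho phi0 lam k (fun t xs => / h t xs) t xs =
  - lam_prol n rho phi0 lam k h t xs * (/ h t xs * / h t xs).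
Proof. intros HU Hh Hnz Hu. unfold lam_prol.
  assert (E0 := pd_inv U h None t xs HU Hh Hnz Hu). simpl in E0. rewrite E0.
  rewrite (sum_eq _ (fun i => (phi_lam n rho phi0 lam i t xs * px i h t xs) * (- (/ h t xs * / h t xs)))).
  2:{ intros i _. assert (E1 := pd_inv U h (Some i) t xs HU Hh Hnz Hu). simpl in E1. rewrite E1. ring. }
  rewrite <- sum_scal_r. ring.
Qed.

Lemma LP_ext U n rho phi0 lam k f g t xs : wopen U -> (forall t xs, U t xs -> f t xs = g t xs) -> U t xs ->
  lam_prol n rho phi0 lam k f t xs = lam_prol n rho phi0 lam k g t xs.
Proof. intros HU E Hu. unfold lam_prol.
  rewrite (pd_ext U f g None t xs HU E Hu : pt f t xs = pt g t xs). f_equal.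
  apply sum_eq. intros i _. rewrite (pd_ext U f g (Some i) t xs HU E Hu : px i f t xs = px i g t xs). auto.
Qed.

Lemma LP_order n rho phi0 lam k d f m t xs : jet_order m f -> (m <= k)%nat ->
  lam_prol n rho phi0 lam k f t xs = lam_prol n rho phi0 lam (k + d) f t xs.
Proof. intros Hm Hk. induction d.
  - rewrite Nat.add_0_r. reflexivity.
  - rewrite IHd. unfold lam_prol. rewrite Nat.add_succ_r. simpl (sum_f_R0 _ (S _)).
    rewrite (px_high m f (S (k + d))) by (auto; lia). ring.
Qed.

Lemma X_quot U n rho phi0 lam k g h a t xs : wopen U -> Cl U g -> Cl U h ->
  (forall t xs, U t xs -> h t xs <> 0) -> U t xs ->
  lam_prol n rho phi0 lam k g t xs = a * g t xs -> lam_prol n rho phi0 lam k h t xs = a * h t xs ->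
  lam_prol n rho phi0 lam k (fun t xs => g t xs / h t xs) t xs = 0.
Proof. intros HU Hg Hh Hnz Hu E1 E2.
  assert (Hi : Cl U (fun t xs => / h t xs)) by (apply ClI; auto).
  change (fun t xs => g t xs / h t xs) with (fun t xs => g t xs * / h t xs).
  rewrite (LP_mult U n rho phi0 lam k g (fun t xs => / h t xs) t xs HU Hg Hi Hu).
  rewrite (LP_inv U) by auto. rewrite E1, E2. assert (h t xs <> 0) by auto. field. auto.
Qed.

Lemma Z_order n z zeta k : jet_order 0 z -> jet_order 1 zeta -> jet_order (S k) (zeta_seq n z zeta k).
Proof. intros Hz Hze. induction k; simpl; auto.
  intros t xs ys E. rewrite (jet_order_Dt (S k) n _ IHk t xs ys E).
  rewrite (jet_order_Dt 0 n z Hz t xs ys) by (intros; apply E; lia). reflexivity.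
Qed.

Lemma Z_Cl U n z zeta k : wopen U -> Cl U z -> Cl U zeta ->
  (forall t xs, U t xs -> Dt n z t xs <> 0) -> Cl U (zeta_seq n z zeta k).
Proof. intros HU Hz Hze Hnz. induction k; simpl; auto.
  apply (ClE U (fun t xs => Dt n (zeta_seq n z zeta k) t xs * / Dt n z t xs)).
  apply ClM. apply Cl_Dt; auto. apply ClI; auto. apply Cl_Dt; auto. intros; reflexivity.
Qed.

Lemma sum_upd_far xs j s (g : nat -> R) N : (N < j)%nat ->
  sum_f_R0 (fun i => upd xs (S j) s (S i) * g i) N = sum_f_R0 (fun i => xs (S i) * g i) N.
Proof. intro H. apply sum_eq. intros i Hi. rewrite upd_neq by lia. reflexivity. Qed.

Lemma sum_upd xs j s (g : nat -> R) N : (j <= N)%nat ->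
  sum_f_R0 (fun i => upd xs (S j) s (S i) * g i) N = sum_f_R0 (fun i => xs (S i) * g i) N + (s - xs (S j)) * g j.
Proof. induction N; intro H.
  - assert (j = 0%nat) by lia. subst. simpl. rewrite upd_eq. ring.
  - simpl. destruct (Nat.eq_dec j (S N)).
    + subst. rewrite sum_upd_far by lia. rewrite upd_eq. ring.
    + rewrite IHN by lia. rewrite upd_neq by lia. ring.
Qed.

Lemma Z_px n z zeta k t xs : jet_order 0 z -> jet_order 1 zeta -> (S k <= n)%nat ->
  px (S (S k)) (zeta_seq n z zeta (S k)) t xs = px (S k) (zeta_seq n z zeta k) t xs / Dt n z t xs.
Proof. intros Hz Hze Hk. unfold px at 1.
  set (Zk := zeta_seq n z zeta k).
  assert (HZ : jet_order (S k) Zk) by (apply Z_order; auto).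
  set (A := pt Zk t xs + sum_f_R0 (fun i => xs (S i) * px i Zk t xs) n).
  set (B := px (S k) Zk t xs). set (D := Dt n z t xs).
  assert (E : (fun s => zeta_seq n z zeta (S k) t (upd xs (S (S k)) s)) =
              (fun s => (A + (s - xs (S (S k))) * B) * / D)).
  { apply functional_extensionality; intro s. simpl. fold Zk. unfold Rdiv. f_equal.
    - unfold Dt at 1. unfold A, B.
      assert (E1 : pt Zk t (upd xs (S (S k)) s) = pt Zk t xs).
      { apply (jet_order_pd (S k) Zk None HZ). intros; rewrite upd_neq; auto; lia. }
      rewrite E1.
      rewrite (sum_eq (fun i => upd xs (S (S k)) s (S i) * px i Zk t (upd xs (S (S k)) s))
          (fun i => upd xs (S (S k)) s (S i) * px i Zk t xs)).
      2:{ intros i _. f_equal. apply (jet_order_pd (S k) Zk (Some i) HZ). intros; rewrite upd_neq; auto; lia. }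
      rewrite (sum_upd xs (S k) s (fun i => px i Zk t xs)) by lia. ring.
    - unfold D. f_equal. apply (jet_order_Dt 0 n z Hz). intros; rewrite upd_neq; auto; lia. }
  rewrite E. apply Deriv_eq. unfold Rdiv.
  apply (dpl_ext (fun s => (fct_cte A s + (id s - fct_cte (xs (S (S k))) s) * fct_cte B s) * fct_cte (/ D) s)).
  2:{ intro s. reflexivity. }
  assert (HH : derivable_pt_lim (fun s => (fct_cte A s + (id s - fct_cte (xs (S (S k))) s) * fct_cte B s) * fct_cte (/ D) s) (xs (S (S k)))
    ((0 + ((1 - 0) * fct_cte B (xs (S (S k))) + (id (xs (S (S k))) - fct_cte (xs (S (S k))) (xs (S (S k)))) * 0)) * fct_cte (/ D) (xs (S (S k)))
     + (fct_cte A (xs (S (S k))) + (id (xs (S (S k))) - fct_cte (xs (S (S k))) (xs (S (S k)))) * fct_cte B (xs (S (S k)))) * 0)).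
  { apply (derivable_pt_lim_mult (fun s => fct_cte A s + (id s - fct_cte (xs (S (S k))) s) * fct_cte B s) (fct_cte (/D))).
    2: apply derivable_pt_lim_const.
    apply (derivable_pt_lim_plus (fct_cte A) (fun s => (id s - fct_cte (xs (S (S k))) s) * fct_cte B s)).
    apply derivable_pt_lim_const.
    apply (derivable_pt_lim_mult (fun s => id s - fct_cte (xs (S (S k))) s) (fct_cte B)).
    2: apply derivable_pt_lim_const.
    apply (derivable_pt_lim_minus id (fct_cte (xs (S (S k))))). apply derivable_pt_lim_id. apply derivable_pt_lim_const. }
  unfold fct_cte, id in HH. replace (B * / D) with ((0 + ((1 - 0) * B + (xs (S (S k)) - xs (S (S k))) * 0)) * / D +
      (A + (xs (S (S k)) - xs (S (S k))) * B) * 0) by ring. exact HH.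
Qed.

Lemma Z_nz U n z zeta k t xs : jet_order 0 z -> jet_order 1 zeta -> (k < n)%nat ->
  (forall t xs, U t xs -> px 1 zeta t xs <> 0) -> (forall t xs, U t xs -> Dt n z t xs <> 0) -> U t xs ->
  px (S k) (zeta_seq n z zeta k) t xs <> 0.
Proof. intros Hz Hze Hk H1 H2 Hu. induction k.
  - simpl. auto.
  - rewrite Z_px by (auto; lia). unfold Rdiv. apply Rmult_integral_contrapositive. split.
    apply IHk; lia. apply Rinv_neq_0_compat. auto.
Qed.

Lemma Z_inv U n rho phi0 lam z zeta k : wopen U -> Cl U rho -> Cl U phi0 -> Cl U lam -> Cl U z -> Cl U zeta ->
  jet_order 0 z -> jet_order 1 zeta -> (forall t xs, U t xs -> Dt n z t xs <> 0) -> (k < n)%nat ->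
  (forall t xs, U t xs -> lam_prol n rho phi0 lam n z t xs = 0) ->
  (forall t xs, U t xs -> lam_prol n rho phi0 lam n zeta t xs = 0) ->
  forall t xs, U t xs -> lam_prol n rho phi0 lam n (zeta_seq n z zeta k) t xs = 0.
Proof. intros HU H1 H2 H3 Hz Hze Hoz Hoze Hnz Hk Xz Xze. induction k; intros t xs Hu.
  - simpl. auto.
  - simpl. apply (X_quot U n rho phi0 lam n _ _ (- (Dt n rho t xs + lam t xs * rho t xs))); auto.
    + apply Cl_Dt; auto. apply Z_Cl; auto.
    + apply Cl_Dt; auto.
    + apply (commutator U n rho phi0 lam _ (S k)); auto. apply Z_Cl; auto. apply Z_order; auto.
      intros; apply IHk; auto; lia.
    + apply (commutator U n rho phi0 lam _ 0); auto. lia.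
Qed.

Lemma MVT_gen (g g' : R -> R) a b :
  (forall c, Rabs (c - a) <= Rabs (b - a) -> derivable_pt_lim g c (g' c)) ->
  exists c, Rabs (c - a) <= Rabs (b - a) /\ g b - g a = g' c * (b - a).
Proof. intro H. destruct (Rtotal_order a b) as [Hab|[Hab|Hab]].
  - destruct (MVT_cor2 g g' a b Hab) as [c [E Hc]].
    { intros c Hc. apply H. rewrite !Rabs_right by lra. lra. }
    exists c. split; auto. rewrite !Rabs_right by lra. lra.
  - subst. exists b. split. lra. ring.
  - destruct (MVT_cor2 g g' b a Hab) as [c [E Hc]].
    { intros c Hc. apply H. rewrite (Rabs_left (b - a)) by lra. 
      destruct (Rle_dec 0 (c - a)). rewrite Rabs_right by lra. lra. rewrite Rabs_left by lra. lra. }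
    exists c. split. rewrite (Rabs_left (b - a)) by lra. rewrite Rabs_left by lra. lra. lra.
Qed.

Lemma finite_delta (P : nat -> R -> Prop) m :
  (forall j d d', 0 < d' <= d -> P j d -> P j d') ->
  (forall j, (j <= m)%nat -> exists d, 0 < d /\ P j d) ->
  exists d, 0 < d /\ forall j, (j <= m)%nat -> P j d.
Proof. intros Hmono H. induction m.
  - destruct (H 0%nat (le_n 0)) as [d [Hd Hp]]. exists d. split; auto.
    intros j Hj. assert (j = 0%nat) by lia. subst; auto.
  - destruct IHm as [d1 [Hd1 H1]]. intros j Hj; apply H; lia.
    destruct (H (S m) (le_n _)) as [d2 [Hd2 H2]].
    exists (Rmin d1 d2). split. apply Rmin_pos; auto.
    intros j Hj. assert (Hm1 := Rmin_l d1 d2). assert (Hm2 := Rmin_r d1 d2).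
    destruct (Nat.eq_dec j (S m)).
    + subst. apply (Hmono _ d2); auto. split. apply Rmin_pos; auto. auto.
    + apply (Hmono _ d1); auto. split. apply Rmin_pos; auto. auto. apply H1; lia.
Qed.

Definition mix (j : nat) (xs ys : nat -> R) : nat -> R := fun i => if Nat.ltb i j then ys i else xs i.

Lemma mix_S j xs ys : mix (S j) xs ys = upd (mix j xs ys) j (ys j).
Proof. apply functional_extensionality; intro i. unfold mix, upd.
  destruct (Nat.ltb_spec i (S j)); destruct (Nat.eqb_spec i j); destruct (Nat.ltb_spec i j); subst; auto; lia. Qed.

Lemma mix_j j xs ys : mix j xs ys = upd (mix j xs ys) j (xs j).
Proof. apply functional_extensionality; intro i. unfold mix, upd.
  destruct (Nat.eqb_spec i j); destruct (Nat.ltb_spec i j); subst; auto; lia. Qed.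

Lemma px_dpl U f j t xs : wopen U -> Cl U f -> U t xs ->
  derivable_pt_lim (fun s => f t (upd xs j s)) (xs j) (px j f t xs).
Proof. intros HU Hf Hu. exact (Cl_der U f (Some j) t xs HU Hf Hu). Qed.

Lemma pt_dpl U f t xs : wopen U -> Cl U f -> U t xs ->
  derivable_pt_lim (fun s => f s xs) t (pt f t xs).
Proof. intros HU Hf Hu. exact (Cl_der U f None t xs HU Hf Hu). Qed.

Lemma frechet U f m t xs : wopen U -> Cl U f -> jet_order m f -> U t xs ->
  forall eps, 0 < eps -> exists del, 0 < del /\ forall t' ys,
    Rabs (t' - t) < del -> (forall i, (i <= m)%nat -> Rabs (ys i - xs i) < del) ->
    Rabs (f t' ys - f t xs - pt f t xs * (t' - t) - sum_f_R0 (fun i => px i f t xs * (ys i - xs i)) m)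
      <= eps * (Rabs (t' - t) + sum_f_R0 (fun i => Rabs (ys i - xs i)) m).
Proof.
  intros HU Hf Hm Hu eps Heps.
  destruct (HU t xs Hu) as [d0 [Hd0 HU0]].
  destruct (Cl_cont U (pd None f) t xs HU (Cl_pd U f None HU Hf) Hu eps Heps) as [d1 [Hd1 H1]].
  destruct (finite_delta (fun j d => forall t' ys, Rabs (t' - t) < d -> (forall i, Rabs (ys i - xs i) < d) ->
      Rabs (px j f t' ys - px j f t xs) < eps) m) as [d2 [Hd2 H2]].
  { intros j d d' Hd' Hp t' ys Ht Hy. apply Hp. lra. intro i; specialize (Hy i); lra. }
  { intros j _. apply (Cl_cont U (pd (Some j) f) t xs HU (Cl_pd U f (Some j) HU Hf) Hu eps Heps). }
  set (del := Rmin d0 (Rmin d1 d2)).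
  assert (Hm0 : del <= d0) by apply Rmin_l.
  assert (Hm1 : del <= d1) by (eapply Rle_trans; [apply Rmin_r| apply Rmin_l]).
  assert (Hm2 : del <= d2) by (eapply Rle_trans; [apply Rmin_r| apply Rmin_r]).
  assert (Hdel : 0 < del) by (apply Rmin_pos; auto; apply Rmin_pos; auto).
  exists del. split; auto. intros t' ys Ht Hy.
  assert (Hclose : forall j c i, (j <= m)%nat -> Rabs (c - xs j) <= Rabs (ys j - xs j) ->
      Rabs (upd (mix j xs ys) j c i - xs i) < del).
  { intros j c i Hj Hc. unfold upd, mix. destruct (Nat.eqb_spec i j).
    - subst. specialize (Hy j Hj). lra.
    - destruct (Nat.ltb_spec i j). apply Hy; lia. rewrite Rminus_diag, Rabs_R0. auto. }
  assert (Step : forall j, (j <= m)%nat ->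
     Rabs (f t' (mix (S j) xs ys) - f t' (mix j xs ys) - px j f t xs * (ys j - xs j)) <= eps * Rabs (ys j - xs j)).
  { intros j Hj.
    destruct (MVT_gen (fun s => f t' (upd (mix j xs ys) j s)) (fun s => px j f t' (upd (mix j xs ys) j s)) (xs j) (ys j))
      as [c [Hc E]].
    { intros c Hc. assert (Hq : U t' (upd (mix j xs ys) j c)).
      { apply HU0. lra. intro i. specialize (Hclose j c i Hj Hc). lra. }
      pose proof (px_dpl U f j t' (upd (mix j xs ys) j c) HU Hf Hq) as D.
      rewrite upd_eq in D. eapply dpl_ext. exact D. intro s. simpl. rewrite upd_upd. reflexivity. }
    rewrite mix_S. rewrite (mix_j j xs ys) at 2. rewrite E.
    replace (px j f t' (upd (mix j xs ys) j c) * (ys j - xs j) - px j f t xs * (ys j - xs j))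
      with ((px j f t' (upd (mix j xs ys) j c) - px j f t xs) * (ys j - xs j)) by ring.
    rewrite Rabs_mult. apply Rmult_le_compat_r. apply Rabs_pos.
    left. apply H2; auto. lra. intro i. specialize (Hclose j c i Hj Hc). lra. }
  assert (Claim : forall j, (j <= m)%nat ->
     Rabs (f t' (mix (S j) xs ys) - f t' xs - sum_f_R0 (fun i => px i f t xs * (ys i - xs i)) j)
       <= eps * sum_f_R0 (fun i => Rabs (ys i - xs i)) j).
  { induction j; intro Hj.
    - simpl. assert (E : mix 0 xs ys = xs) by (apply functional_extensionality; intro i; unfold mix; destruct (Nat.ltb_spec i 0); auto; lia).
      rewrite <- E at 2. apply Step. lia.
    - simpl. specialize (IHj ltac:(lia)). specialize (Step (S j) Hj).
      replace (f t' (mix (S (S j)) xs ys) - f t' xs - (sum_f_R0 (fun i => px i f t xs * (ys i - xs i)) j + px (S j) f t xs * (ys (S j) - xs (S j))))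
        with ((f t' (mix (S j) xs ys) - f t' xs - sum_f_R0 (fun i => px i f t xs * (ys i - xs i)) j) +
              (f t' (mix (S (S j)) xs ys) - f t' (mix (S j) xs ys) - px (S j) f t xs * (ys (S j) - xs (S j)))) by ring.
      eapply Rle_trans. apply Rabs_triang. lra. }
  assert (Time : Rabs (f t' xs - f t xs - pt f t xs * (t' - t)) <= eps * Rabs (t' - t)).
  { destruct (MVT_gen (fun s => f s xs) (fun s => pt f s xs) t t') as [c [Hc E]].
    { intros c Hc. apply (pt_dpl U f c xs HU Hf). apply HU0. lra. intro i. rewrite Rminus_diag, Rabs_R0. auto. }
    rewrite E. replace (pt f c xs * (t' - t) - pt f t xs * (t' - t)) with ((pt f c xs - pt f t xs) * (t' - t)) by ring.
    rewrite Rabs_mult. apply Rmult_le_compat_r. apply Rabs_pos. left. apply H1. lra.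
    intro i. rewrite Rminus_diag, Rabs_R0. auto. }
  assert (EY : f t' ys = f t' (mix (S m) xs ys)).
  { apply Hm. intros i Hi. unfold mix. destruct (Nat.ltb_spec i (S m)); auto; lia. }
  rewrite EY. specialize (Claim m (le_n m)).
  replace (f t' (mix (S m) xs ys) - f t xs - pt f t xs * (t' - t) - sum_f_R0 (fun i => px i f t xs * (ys i - xs i)) m)
    with ((f t' (mix (S m) xs ys) - f t' xs - sum_f_R0 (fun i => px i f t xs * (ys i - xs i)) m) +
          (f t' xs - f t xs - pt f t xs * (t' - t))) by ring.
  eapply Rle_trans. apply Rabs_triang. lra.
Qed.

Lemma dpl_bound g l : derivable_pt_lim g 0 l -> forall eps, 0 < eps -> exists del, 0 < del /\
  forall s, Rabs s < del -> Rabs (g s - g 0 - l * s) <= eps * Rabs s.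
Proof. intros H eps Heps. destruct (H eps Heps) as [d Hd]. exists d. split. apply cond_pos.
  intros s Hs. destruct (Req_dec s 0).
  - subst. rewrite Rabs_R0. replace (g 0 - g 0 - l * 0) with 0 by ring. rewrite Rabs_R0. lra.
  - specialize (Hd s H0 Hs). rewrite Rplus_0_l in Hd.
    replace (g s - g 0 - l * s) with (((g s - g 0) / s - l) * s) by (field; auto).
    rewrite Rabs_mult. apply Rmult_le_compat_r. apply Rabs_pos. lra.
Qed.

Lemma sum_nonneg (a : nat -> R) N : (forall i, (i <= N)%nat -> 0 <= a i) -> 0 <= sum_f_R0 a N.
Proof. intro H. induction N; simpl. apply H; lia. assert (0 <= a (S N)) by (apply H; lia).
  assert (0 <= sum_f_R0 a N) by (apply IHN; intros; apply H; lia). lra. Qed.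

Lemma sum_le_one (a : nat -> R) N j : (forall i, (i <= N)%nat -> 0 <= a i) -> (j <= N)%nat -> a j <= sum_f_R0 a N.
Proof. intros H Hj. induction N; simpl.
  - assert (j = 0%nat) by lia. subst. lra.
  - destruct (Nat.eq_dec j (S N)). subst. assert (0 <= sum_f_R0 a N) by (apply sum_nonneg; intros; apply H; lia). lra.
    assert (a j <= sum_f_R0 a N) by (apply IHN; intros; try apply H; lia). assert (0 <= a (S N)) by (apply H; lia). lra.
Qed.

Lemma curveF U f m t xs (T : R -> R) (Y : R -> nat -> R) T' (W : nat -> R) et (e : nat -> R) :
  wopen U -> Cl U f -> jet_order m f -> U t xs -> T 0 = t -> (forall i, Y 0 i = xs i) ->
  derivable_pt_lim T 0 T' -> (forall i, (i <= m)%nat -> derivable_pt_lim (fun s => Y s i) 0 (W i)) ->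
  forall eps, 0 < eps -> exists del, 0 < del /\ forall s r, Rabs s < del -> Rabs r < del ->
    Rabs (f (T s + r * et) (fun i => Y s i + r * e i) - f t xs
          - (pt f t xs * T' + sum_f_R0 (fun i => px i f t xs * W i) m) * s
          - (pt f t xs * et + sum_f_R0 (fun i => px i f t xs * e i) m) * r)
      <= eps * (Rabs s + Rabs r).
Proof.
  intros HU Hf Hm Hu HT0 HY0 HT HY eps Heps.
  set (K := Rabs (pt f t xs) + sum_f_R0 (fun i => Rabs (px i f t xs)) m).
  set (C := 1 + Rabs T' + Rabs et + sum_f_R0 (fun i => 1 + Rabs (W i) + Rabs (e i)) m).
  assert (HK : 0 <= K) by (apply Rplus_le_le_0_compat; [apply Rabs_pos| apply sum_nonneg; intros; apply Rabs_pos]).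
  assert (HC0 : 0 <= sum_f_R0 (fun i => 1 + Rabs (W i) + Rabs (e i)) m).
  { apply sum_nonneg. intros. assert (0 <= Rabs (W i)) by apply Rabs_pos. assert (0 <= Rabs (e i)) by apply Rabs_pos. lra. }
  assert (HC : 1 <= C). { unfold C. assert (0 <= Rabs T') by apply Rabs_pos. assert (0 <= Rabs et) by apply Rabs_pos. lra. }
  assert (He1 : 0 < eps / (2 * C)) by (apply Rdiv_lt_0_compat; lra).
  destruct (frechet U f m t xs HU Hf Hm Hu _ He1) as [dF [HdF HF]].
  set (e2 := Rmin 1 (eps / (2 * (K + 1)))).
  assert (He2 : 0 < e2) by (apply Rmin_pos; [lra| apply Rdiv_lt_0_compat; lra]).
  assert (He2a : e2 <= 1) by apply Rmin_l.
  assert (He2b : e2 * K <= eps / 2).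
  { assert (e2 <= eps / (2 * (K + 1))) by apply Rmin_r.
    assert (0 < eps / (2 * (K + 1))) by (apply Rdiv_lt_0_compat; lra).
    apply Rle_trans with (eps / (2 * (K + 1)) * K). apply Rmult_le_compat_r; auto.
    apply Rle_trans with (eps / (2 * (K + 1)) * (K + 1)). apply Rmult_le_compat_l; lra.
    right. field. lra. }
  destruct (dpl_bound T T' HT e2 He2) as [dT [HdT HTb]].
  destruct (finite_delta (fun i d => forall s, Rabs s < d -> Rabs (Y s i - Y 0 i - W i * s) <= e2 * Rabs s) m)
    as [dY [HdY HYb]].
  { intros j d d' Hd' Hp s Hs. apply Hp. lra. }
  { intros j Hj. apply (dpl_bound (fun s => Y s j) (W j) (HY j Hj) e2 He2). }
  set (del := Rmin (Rmin dT dY) (dF / (2 * C))).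
  assert (Hdel : 0 < del). { apply Rmin_pos. apply Rmin_pos; auto. apply Rdiv_lt_0_compat; lra. }
  assert (Hd1 : del <= dT) by (eapply Rle_trans; [apply Rmin_l| apply Rmin_l]).
  assert (Hd2 : del <= dY) by (eapply Rle_trans; [apply Rmin_l| apply Rmin_r]).
  assert (Hd3 : del <= dF / (2 * C)) by apply Rmin_r.
  exists del. split; auto. intros s r Hs Hr.
  assert (HTs : Rabs (T s - t - T' * s) <= e2 * Rabs s) by (rewrite <- HT0; apply HTb; lra).
  assert (HYs : forall i, (i <= m)%nat -> Rabs (Y s i - xs i - W i * s) <= e2 * Rabs s).
  { intros i Hi. rewrite <- (HY0 i). apply HYb; auto. lra. }
  assert (Bt : Rabs (T s + r * et - t) <= C * (Rabs s + Rabs r)).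
  { replace (T s + r * et - t) with ((T s - t - T' * s) + T' * s + r * et) by ring.
    eapply Rle_trans. apply Rabs_triang. eapply Rle_trans. apply Rplus_le_compat_r. apply Rabs_triang.
    rewrite !Rabs_mult. assert (0 <= Rabs s) by apply Rabs_pos. assert (0 <= Rabs r) by apply Rabs_pos.
    assert (0 <= Rabs T') by apply Rabs_pos. assert (0 <= Rabs et) by apply Rabs_pos.
    assert (e2 * Rabs s <= Rabs s) by (rewrite <- (Rmult_1_l (Rabs s)) at 2; apply Rmult_le_compat_r; lra).
    unfold C. nra. }
  assert (By : forall i, (i <= m)%nat -> Rabs (Y s i + r * e i - xs i) <= (1 + Rabs (W i) + Rabs (e i)) * (Rabs s + Rabs r)).
  { intros i Hi. specialize (HYs i Hi).
    replace (Y s i + r * e i - xs i) with ((Y s i - xs i - W i * s) + W i * s + r * e i) by ring.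
    eapply Rle_trans. apply Rabs_triang. eapply Rle_trans. apply Rplus_le_compat_r. apply Rabs_triang.
    rewrite !Rabs_mult. assert (0 <= Rabs s) by apply Rabs_pos. assert (0 <= Rabs r) by apply Rabs_pos.
    assert (0 <= Rabs (W i)) by apply Rabs_pos. assert (0 <= Rabs (e i)) by apply Rabs_pos.
    assert (e2 * Rabs s <= Rabs s) by (rewrite <- (Rmult_1_l (Rabs s)) at 2; apply Rmult_le_compat_r; lra).
    nra. }
  assert (Hsum_le : forall i, (i <= m)%nat -> 1 + Rabs (W i) + Rabs (e i) <= C).
  { intros i Hi. unfold C. assert (0 <= Rabs T') by apply Rabs_pos. assert (0 <= Rabs et) by apply Rabs_pos.
    assert (1 + Rabs (W i) + Rabs (e i) <= sum_f_R0 (fun i => 1 + Rabs (W i) + Rabs (e i)) m).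
    { apply (sum_le_one (fun i => 1 + Rabs (W i) + Rabs (e i))); auto.
      intros. assert (0 <= Rabs (W i0)) by apply Rabs_pos. assert (0 <= Rabs (e i0)) by apply Rabs_pos. lra. }
    lra. }
  assert (Hsr : Rabs s + Rabs r < 2 * del) by lra.
  assert (HCd : C * (2 * del) <= dF).
  { apply Rle_trans with (C * (2 * (dF / (2 * C)))). apply Rmult_le_compat_l; lra.
    right. field. lra. }
  assert (0 <= Rabs s) by apply Rabs_pos. assert (0 <= Rabs r) by apply Rabs_pos.
  specialize (HF (T s + r * et) (fun i => Y s i + r * e i)).
  assert (Fr := HF ltac:(nra) ltac:(intros i Hi; specialize (By i Hi); specialize (Hsum_le i Hi); nra)).
  cbv beta in Fr.
  assert (HD : Rabs (T s + r * et - t) + sum_f_R0 (fun i => Rabs (Y s i + r * e i - xs i)) m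
               <= C * (Rabs s + Rabs r)).
  { apply Rle_trans with (((Rabs T' + Rabs et + 1) + sum_f_R0 (fun i => 1 + Rabs (W i) + Rabs (e i)) m) * (Rabs s + Rabs r)).
    2: { unfold C. right. ring. }
    rewrite Rmult_plus_distr_r. apply Rplus_le_compat.
    - replace (T s + r * et - t) with ((T s - t - T' * s) + T' * s + r * et) by ring.
      eapply Rle_trans. apply Rabs_triang. eapply Rle_trans. apply Rplus_le_compat_r. apply Rabs_triang.
      rewrite !Rabs_mult. assert (0 <= Rabs T') by apply Rabs_pos. assert (0 <= Rabs et) by apply Rabs_pos.
      assert (e2 * Rabs s <= Rabs s) by (rewrite <- (Rmult_1_l (Rabs s)) at 2; apply Rmult_le_compat_r; lra).
      nra.
    - rewrite sum_scal_r. apply sum_Rle. intros i Hi. apply By; auto. }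
  assert (HL : Rabs (pt f t xs * (T s + r * et - t) + sum_f_R0 (fun i => px i f t xs * (Y s i + r * e i - xs i)) m
            - (pt f t xs * T' + sum_f_R0 (fun i => px i f t xs * W i) m) * s
            - (pt f t xs * et + sum_f_R0 (fun i => px i f t xs * e i) m) * r) <= e2 * K * Rabs s).
  { replace (pt f t xs * (T s + r * et - t) + sum_f_R0 (fun i => px i f t xs * (Y s i + r * e i - xs i)) m
            - (pt f t xs * T' + sum_f_R0 (fun i => px i f t xs * W i) m) * s
            - (pt f t xs * et + sum_f_R0 (fun i => px i f t xs * e i) m) * r)
      with (pt f t xs * (T s - t - T' * s) + sum_f_R0 (fun i => px i f t xs * (Y s i - xs i - W i * s)) m).
    2:{ rewrite !Rmult_plus_distr_r, !sum_scal_r.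
        assert (Es : sum_f_R0 (fun i => px i f t xs * (Y s i + r * e i - xs i)) m =
          sum_f_R0 (fun i => px i f t xs * (Y s i - xs i - W i * s)) m + sum_f_R0 (fun i => px i f t xs * W i * s) m
          + sum_f_R0 (fun i => px i f t xs * e i * r) m).
        { rewrite <- !sum_plus. apply sum_eq. intros; ring. }
        rewrite Es. ring. }
    eapply Rle_trans. apply Rabs_triang. rewrite Rabs_mult.
    eapply Rle_trans. apply Rplus_le_compat_l. apply sum_f_R0_triangle.
    unfold K. rewrite Rmult_plus_distr_l, Rmult_plus_distr_r.
    apply Rplus_le_compat.
    - assert (0 <= Rabs (pt f t xs)) by apply Rabs_pos. nra.
    - rewrite sum_scal_l, sum_scal_r. apply sum_Rle. intros i Hi. rewrite Rabs_mult.
      assert (0 <= Rabs (px i f t xs)) by apply Rabs_pos. specialize (HYs i Hi). nra. }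
  set (LIN := pt f t xs * (T s + r * et - t) + sum_f_R0 (fun i => px i f t xs * (Y s i + r * e i - xs i)) m) in *.
  replace (f (T s + r * et) (fun i => Y s i + r * e i) - f t xs
          - (pt f t xs * T' + sum_f_R0 (fun i => px i f t xs * W i) m) * s
          - (pt f t xs * et + sum_f_R0 (fun i => px i f t xs * e i) m) * r)
    with ((f (T s + r * et) (fun i => Y s i + r * e i) - f t xs - pt f t xs * (T s + r * et - t)
           - sum_f_R0 (fun i => px i f t xs * (Y s i + r * e i - xs i)) m)
          + (LIN - (pt f t xs * T' + sum_f_R0 (fun i => px i f t xs * W i) m) * s
          - (pt f t xs * et + sum_f_R0 (fun i => px i f t xs * e i) m) * r)) by (unfold LIN; ring).
  eapply Rle_trans. apply Rabs_triang.
  assert (Q1 : eps / (2 * C) * (Rabs (T s + r * et - t) + sum_f_R0 (fun i => Rabs (Y s i + r * e i - xs i)) m)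
               <= eps / 2 * (Rabs s + Rabs r)).
  { apply Rle_trans with (eps / (2 * C) * (C * (Rabs s + Rabs r))).
    apply Rmult_le_compat_l; lra. right. field. lra. }
  assert (Q2 : e2 * K * Rabs s <= eps / 2 * (Rabs s + Rabs r)) by nra.
  lra.
Qed.

Lemma root_exists (h : R -> R) rho : 0 < rho -> (forall a, -rho <= a <= rho -> continuity_pt h a) ->
  h (-rho) * h rho < 0 -> exists r, Rabs r <= rho /\ h r = 0.
Proof. intros Hr Hc Hs. destruct (Rlt_dec (h (-rho)) 0) as [Hn|Hn].
  - assert (H : 0 < h rho).
    { destruct (Rlt_dec 0 (h rho)); auto. assert (h rho <= 0) by lra.
      assert (0 <= h (-rho) * h rho) by (replace (h (-rho) * h rho) with ((- h (-rho)) * (- h rho)) by ring; apply Rmult_le_pos; lra). lra. }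
    destruct (IVT_interv h (-rho) rho Hc ltac:(lra) Hn H) as [z [Hz E]].
    exists z. split; auto. apply Rabs_le. lra.
  - assert (0 < h (-rho)) by (destruct (Req_dec (h (-rho)) 0) as [E|E]; [rewrite E in Hs; lra| lra]).
    assert (h rho < 0).
    { destruct (Rlt_dec (h rho) 0); auto. assert (0 <= h rho) by lra.
      assert (0 <= h (-rho) * h rho) by (apply Rmult_le_pos; lra). lra. }
    destruct (IVT_interv (fun x => - h x) (-rho) rho) as [z [Hz E]].
    { intros a Ha. apply continuity_pt_opp. auto. }
    lra. lra. lra. exists z. split. apply Rabs_le. lra. lra.
Qed.

Lemma abs_bounds x c : Rabs x <= c -> -c <= x <= c.
Proof. unfold Rabs; destruct (Rcase_abs x); lra. Qed.

Lemma ift_abs (g : R -> R -> R) A B : B <> 0 ->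
  (forall eps, 0 < eps -> exists del, 0 < del /\ forall s r, Rabs s < del -> Rabs r < del ->
      Rabs (g s r - A * s - B * r) <= eps * (Rabs s + Rabs r)) ->
  (exists d0, 0 < d0 /\ forall s, Rabs s < d0 -> forall r, Rabs r < d0 -> continuity_pt (g s) r) ->
  exists rr : R -> R, exists d1, 0 < d1 /\ (forall s, Rabs s < d1 -> g s (rr s) = 0) /\ rr 0 = 0 /\
     derivable_pt_lim rr 0 (- A / B).
Proof.
  intros HB H1 [d0 [Hd0 H2]].
  assert (HaB : 0 < Rabs B) by (apply Rabs_pos_lt; auto).
  destruct (H1 (Rabs B / 4) ltac:(lra)) as [dl0 [Hdl0 H0]].
  set (rho := Rmin dl0 d0 / 2).
  assert (Hrho : 0 < rho) by (unfold rho; assert (0 < Rmin dl0 d0) by (apply Rmin_pos; auto); lra).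
  assert (Hrho1 : rho < dl0) by (unfold rho; assert (Rmin dl0 d0 <= dl0) by apply Rmin_l; lra).
  assert (Hrho2 : rho < d0) by (unfold rho; assert (Rmin dl0 d0 <= d0) by apply Rmin_r; lra).
  set (d1 := Rmin rho (rho * Rabs B / (2 * (Rabs A + Rabs B + 1)))).
  assert (HA : 0 <= Rabs A) by apply Rabs_pos.
  assert (Hd1 : 0 < d1). { apply Rmin_pos; auto. apply Rdiv_lt_0_compat. nra. lra. }
  assert (Hd1a : d1 <= rho) by apply Rmin_l.
  assert (Hd1b : d1 * (2 * (Rabs A + Rabs B + 1)) <= rho * Rabs B).
  { apply Rle_trans with (rho * Rabs B / (2 * (Rabs A + Rabs B + 1)) * (2 * (Rabs A + Rabs B + 1))).
    apply Rmult_le_compat_r. lra. apply Rmin_r. right. field. lra. }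
  set (P := fun s r => Rabs r <= rho /\ g s r = 0).
  assert (Ex : forall s, Rabs s < d1 -> exists r, P s r).
  { intros s Hs. apply root_exists. auto.
    - intros a Ha. apply H2. lra. apply Rle_lt_trans with rho. apply Rabs_le. lra. lra.
    - assert (Ha := H0 s rho ltac:(lra) ltac:(rewrite Rabs_right; lra)).
      assert (Hb := H0 s (-rho) ltac:(lra) ltac:(rewrite Rabs_left; lra)).
      rewrite Rabs_Ropp, (Rabs_right rho) in Hb by lra. rewrite (Rabs_right rho) in Ha by lra.
      assert (HAs : Rabs (A * s) <= Rabs A * Rabs s) by (rewrite Rabs_mult; lra).
      assert (Hs0 : 0 <= Rabs s) by apply Rabs_pos.
      assert (Hs2 : Rabs s * (2 * (Rabs A + Rabs B + 1)) <= rho * Rabs B) by nra.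
      apply abs_bounds in Ha. apply abs_bounds in Hb. apply abs_bounds in HAs.
      assert (0 <= Rabs A * Rabs s) by (apply Rmult_le_pos; lra).
      destruct (Rlt_dec 0 B).
      + rewrite (Rabs_right B) in * by lra. assert (0 <= B * Rabs s) by (apply Rmult_le_pos; lra).
        assert (0 < B * rho) by (apply Rmult_lt_0_compat; lra).
        assert (g s rho > 0) by lra. assert (g s (-rho) < 0) by lra.
        assert (0 < g s rho * (- g s (-rho))) by (apply Rmult_lt_0_compat; lra). lra.
      + assert (B < 0) by (destruct (Req_dec B 0); [contradiction| lra]).
        rewrite (Rabs_left B) in * by lra. assert (0 <= - B * Rabs s) by (apply Rmult_le_pos; lra).
        assert (0 < - B * rho) by (apply Rmult_lt_0_compat; lra).
        assert (g s rho < 0) by lra. assert (g s (-rho) > 0) by lra.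
        assert (0 < (- g s rho) * g s (-rho)) by (apply Rmult_lt_0_compat; lra). lra. }
  set (rr := fun s => epsilon (inhabits 0) (P s)).
  assert (Hrr : forall s, Rabs s < d1 -> P s (rr s)).
  { intros s Hs. apply epsilon_spec. apply Ex; auto. }
  set (Cr := (4 * Rabs A + Rabs B) / (3 * Rabs B)).
  assert (HCr : 0 <= Cr) by (unfold Cr; apply Rmult_le_pos; [lra| left; apply Rinv_0_lt_compat; lra]).
  assert (Hbnd : forall s, Rabs s < d1 -> Rabs (rr s) <= Cr * Rabs s).
  { intros s Hs. destruct (Hrr s Hs) as [Hr1 Hr2].
    assert (Q := H0 s (rr s) ltac:(lra) ltac:(lra)). rewrite Hr2 in Q.
    replace (0 - A * s - B * rr s) with (- (A * s + B * rr s)) in Q by ring. rewrite Rabs_Ropp in Q.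
    assert (Rabs (B * rr s) <= Rabs (A * s + B * rr s) + Rabs (A * s)).
    { replace (B * rr s) with ((A * s + B * rr s) + - (A * s)) at 1 by ring.
      eapply Rle_trans. apply Rabs_triang. rewrite Rabs_Ropp. lra. }
    rewrite !Rabs_mult in *. assert (0 <= Rabs (rr s)) by apply Rabs_pos. assert (0 <= Rabs s) by apply Rabs_pos.
    unfold Cr. apply Rmult_le_reg_r with (3 * Rabs B). lra.
    replace ((4 * Rabs A + Rabs B) / (3 * Rabs B) * Rabs s * (3 * Rabs B)) with ((4 * Rabs A + Rabs B) * Rabs s) by (field; lra).
    nra. }
  exists rr, d1. split; auto. split. { intros s Hs. apply Hrr; auto. }
  assert (R0 : rr 0 = 0).
  { assert (Hz : Rabs 0 < d1) by (rewrite Rabs_R0; auto). specialize (Hbnd 0 Hz). rewrite Rabs_R0, Rmult_0_r in Hbnd.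
    assert (0 <= Rabs (rr 0)) by apply Rabs_pos. assert (Rabs (rr 0) = 0) by lra.
    destruct (Req_dec (rr 0) 0); auto. exfalso. apply Rabs_no_R0 in H4; auto. }
  split; auto.
  intros eps Heps.
  assert (He' : 0 < eps * Rabs B / (2 * (1 + Cr))) by (apply Rdiv_lt_0_compat; nra).
  destruct (H1 _ He') as [dl [Hdl H3]].
  set (dd := Rmin d1 (dl / (Cr + 1))).
  assert (Hdd : 0 < dd) by (apply Rmin_pos; auto; apply Rdiv_lt_0_compat; lra).
  exists (mkposreal dd Hdd). intros h Hh0 Hh. simpl in Hh.
  assert (Hh1 : Rabs h < d1) by (eapply Rlt_le_trans; [exact Hh| apply Rmin_l]).
  assert (Hh2 : Rabs h * (Cr + 1) < dl).
  { assert (Rabs h < dl / (Cr + 1)) by (eapply Rlt_le_trans; [exact Hh| apply Rmin_r]).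
    apply Rmult_lt_reg_r with (/ (Cr + 1)). apply Rinv_0_lt_compat; lra.
    rewrite Rmult_assoc, Rinv_r by lra. lra. }
  rewrite Rplus_0_l, R0. destruct (Hrr h Hh1) as [_ Hg].
  assert (Hb := Hbnd h Hh1). assert (0 <= Rabs h) by apply Rabs_pos.
  assert (Q := H3 h (rr h) ltac:(nra) ltac:(nra)). rewrite Hg in Q.
  replace ((rr h - 0) / h - - A / B) with (- (0 - A * h - B * rr h) / (B * h)) by (field; auto).
  unfold Rdiv. rewrite Rabs_mult, Rabs_Ropp, Rabs_Rinv by (apply Rmult_integral_contrapositive; auto).
  rewrite Rabs_mult. assert (HhP : 0 < Rabs h) by (apply Rabs_pos_lt; auto).
  apply Rmult_lt_reg_r with (Rabs B * Rabs h). nra.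
  rewrite Rmult_assoc, Rinv_l by nra. rewrite Rmult_1_r.
  apply Rle_lt_trans with (eps * Rabs B / (2 * (1 + Cr)) * (Rabs h + Rabs (rr h))). exact Q.
  apply Rle_lt_trans with (eps * Rabs B / (2 * (1 + Cr)) * ((1 + Cr) * Rabs h)).
  apply Rmult_le_compat_l. lra. lra.
  replace (eps * Rabs B / (2 * (1 + Cr)) * ((1 + Cr) * Rabs h)) with (eps * (Rabs B * Rabs h) / 2) by (field; lra).
  assert (0 < eps * (Rabs B * Rabs h)) by (apply Rmult_lt_0_compat; [lra| apply Rmult_lt_0_compat; lra]). lra.
Qed.

Definition curve_cont (T : R -> R) (Y : R -> nat -> R) t xs : Prop :=
  forall eps, 0 < eps -> exists del, 0 < del /\ forall s, Rabs s < del ->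
    Rabs (T s - t) < eps /\ forall i, Rabs (Y s i - xs i) < eps.

Lemma ift_step U f m t xs (T : R -> R) (Y : R -> nat -> R) T' (W : nat -> R) et (e : nat -> R) M :
  wopen U -> Cl U f -> jet_order m f -> U t xs -> T 0 = t -> (forall i, Y 0 i = xs i) ->
  derivable_pt_lim T 0 T' -> (forall i, (i <= m)%nat -> derivable_pt_lim (fun s => Y s i) 0 (W i)) ->
  curve_cont T Y t xs -> (forall i, Rabs (e i) <= M) ->
  pt f t xs * et + sum_f_R0 (fun i => px i f t xs * e i) m <> 0 ->
  exists rr : R -> R, exists d1, 0 < d1 /\
    (forall s, Rabs s < d1 -> f (T s + rr s * et) (fun i => Y s i + rr s * e i) = f t xs) /\ rr 0 = 0 /\
    derivable_pt_lim rr 0 (- (pt f t xs * T' + sum_f_R0 (fun i => px i f t xs * W i) m) /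
                             (pt f t xs * et + sum_f_R0 (fun i => px i f t xs * e i) m)).
Proof.
  intros HU Hf Hm Hu HT0 HY0 HT HY Hcc HM HB.
  assert (Hyp1 : forall eps, 0 < eps -> exists del, 0 < del /\ forall s r, Rabs s < del -> Rabs r < del ->
      Rabs ((fun s r => f (T s + r * et) (fun i => Y s i + r * e i) - f t xs) s r
        - (pt f t xs * T' + sum_f_R0 (fun i => px i f t xs * W i) m) * s
        - (pt f t xs * et + sum_f_R0 (fun i => px i f t xs * e i) m) * r) <= eps * (Rabs s + Rabs r)).
  { intros eps Heps. destruct (curveF U f m t xs T Y T' W et e HU Hf Hm Hu HT0 HY0 HT HY eps Heps) as [del [Hdel Hc]].
    exists del. split; auto. }
  assert (Hyp2 : exists d0, 0 < d0 /\ forall s, Rabs s < d0 -> forall r, Rabs r < d0 ->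
      continuity_pt ((fun s r => f (T s + r * et) (fun i => Y s i + r * e i) - f t xs) s) r).
  { destruct (HU t xs Hu) as [dU [HdU HU0]].
    destruct (Hcc (dU / 2) ltac:(lra)) as [dc [Hdc Hc]].
    assert (HM0 : 0 <= M) by (specialize (HM 0%nat); assert (0 <= Rabs (e 0%nat)) by apply Rabs_pos; lra).
    set (Me := Rabs et + M + 1).
    assert (HMe : 0 < Me) by (unfold Me; assert (0 <= Rabs et) by apply Rabs_pos; lra).
    set (d0 := Rmin dc (dU / (2 * Me))).
    assert (Hd0 : 0 < d0) by (apply Rmin_pos; auto; apply Rdiv_lt_0_compat; lra).
    exists d0. split; auto. intros s Hs r Hr.
    assert (Hs' : Rabs s < dc) by (eapply Rlt_le_trans; [exact Hs| apply Rmin_l]).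
    assert (Hr' : Rabs r * Me < dU / 2).
    { assert (Rabs r < dU / (2 * Me)) by (eapply Rlt_le_trans; [exact Hr| apply Rmin_r]).
      apply Rlt_le_trans with (dU / (2 * Me) * Me). apply Rmult_lt_compat_r; auto. right; field; lra. }
    destruct (Hc s Hs') as [Hc1 Hc2].
    assert (Hq : U (T s + r * et) (fun i => Y s i + r * e i)).
    { apply HU0.
      - replace (T s + r * et - t) with ((T s - t) + r * et) by ring. eapply Rle_lt_trans. apply Rabs_triang.
        rewrite Rabs_mult. assert (Rabs r * Rabs et <= Rabs r * Me).
        { apply Rmult_le_compat_l. apply Rabs_pos. unfold Me. lra. } lra.
      - intro i. replace (Y s i + r * e i - xs i) with ((Y s i - xs i) + r * e i) by ring. eapply Rle_lt_trans. apply Rabs_triang.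
        rewrite Rabs_mult. assert (Rabs r * Rabs (e i) <= Rabs r * Me).
        { apply Rmult_le_compat_l. apply Rabs_pos. unfold Me. specialize (HM i). assert (0 <= Rabs et) by apply Rabs_pos. lra. }
        specialize (Hc2 i). lra. }
    assert (Hcq := Cl_cont U f _ _ HU Hf Hq).
    intros eps Heps. destruct (Hcq eps Heps) as [d [Hd Hd2]].
    exists (d / Me). split. apply Rdiv_lt_0_compat; lra.
    intros r' [_ Hr'2]. simpl in Hr'2. unfold R_dist in Hr'2. simpl. unfold R_dist.
    replace (f (T s + r' * et) (fun i => Y s i + r' * e i) - f t xs - (f (T s + r * et) (fun i => Y s i + r * e i) - f t xs))
      with (f (T s + r' * et) (fun i => Y s i + r' * e i) - f (T s + r * et) (fun i => Y s i + r * e i)) by ring.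
    assert (Hrr : Rabs (r' - r) * Me < d).
    { apply Rlt_le_trans with (d / Me * Me). apply Rmult_lt_compat_r; auto. right; field; lra. }
    apply Hd2.
    + replace (T s + r' * et - (T s + r * et)) with ((r' - r) * et) by ring. rewrite Rabs_mult.
      assert (Rabs (r' - r) * Rabs et <= Rabs (r' - r) * Me).
      { apply Rmult_le_compat_l. apply Rabs_pos. unfold Me. lra. } lra.
    + intro i. replace (Y s i + r' * e i - (Y s i + r * e i)) with ((r' - r) * e i) by ring. rewrite Rabs_mult.
      assert (Rabs (r' - r) * Rabs (e i) <= Rabs (r' - r) * Me).
      { apply Rmult_le_compat_l. apply Rabs_pos. unfold Me. specialize (HM i). assert (0 <= Rabs et) by apply Rabs_pos. lra. }
      lra. }
  destruct (ift_abs _ _ _ HB Hyp1 Hyp2) as [rr [d1 [Hd1 [H1 [H2 H3]]]]].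
  - exists rr, d1. split; auto. split.
    + intros s Hs. specialize (H1 s Hs). simpl in H1. lra.
    + split; auto.
Qed.

Definition Inv (n : nat) (z zeta rho phi0 lam : Jet) (t0 : R) (xs0 : nat -> R) (k : nat) : Prop :=
  exists (T : R -> R) (Y : R -> nat -> R), T 0 = t0 /\ (forall i, Y 0 i = xs0 i) /\
    derivable_pt_lim T 0 (rho t0 xs0) /\
    (forall i, (i <= k)%nat -> derivable_pt_lim (fun s => Y s i) 0 (phi_lam n rho phi0 lam i t0 xs0)) /\
    (forall i, (k < i)%nat -> forall s, Y s i = xs0 i) /\ curve_cont T Y t0 xs0 /\
    exists del, 0 < del /\ forall s, Rabs s < del -> z (T s) (Y s) = z t0 xs0 /\
      forall j, (j < k)%nat -> zeta_seq n z zeta j (T s) (Y s) = zeta_seq n z zeta j t0 xs0.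

Lemma curve_cont_step T Y t xs (rr : R -> R) et (e : nat -> R) M l :
  curve_cont T Y t xs -> rr 0 = 0 -> derivable_pt_lim rr 0 l -> (forall i, Rabs (e i) <= M) ->
  curve_cont (fun s => T s + rr s * et) (fun s i => Y s i + rr s * e i) t xs.
Proof. intros Hc H0 Hd HM eps Heps.
  assert (HM0 : 0 <= M) by (specialize (HM 0%nat); assert (0 <= Rabs (e 0%nat)) by apply Rabs_pos; lra).
  set (Me := Rabs et + M + 1).
  assert (HMe : 0 < Me) by (unfold Me; assert (0 <= Rabs et) by apply Rabs_pos; lra).
  destruct (Hc (eps / 2) ltac:(lra)) as [d1 [Hd1 H1]].
  assert (Hcr : continuity_pt rr 0) by (apply derivable_continuous_pt; exists l; exact Hd).
  destruct (Hcr (eps / (2 * Me)) ltac:(apply Rdiv_lt_0_compat; lra)) as [d2 [Hd2 H2]].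
  exists (Rmin d1 d2). split. apply Rmin_pos; auto. intros s Hs.
  assert (Hs1 : Rabs s < d1) by (eapply Rlt_le_trans; [exact Hs| apply Rmin_l]).
  assert (Hs2 : Rabs s < d2) by (eapply Rlt_le_trans; [exact Hs| apply Rmin_r]).
  destruct (H1 s Hs1) as [A1 A2].
  assert (Hr : Rabs (rr s) * Me < eps / 2).
  { destruct (Req_dec s 0) as [E|E].
    - subst. rewrite H0, Rabs_R0. lra.
    - assert (Q : dist R_met (rr s) (rr 0) < eps / (2 * Me)).
      { apply H2. split. split. exact I. intro HH; apply E; auto. simpl. unfold R_dist. rewrite Rminus_0_r. exact Hs2. }
      simpl in Q. unfold R_dist in Q. rewrite H0, Rminus_0_r in Q. assert (Q' := Q).
      apply Rlt_le_trans with (eps / (2 * Me) * Me). apply Rmult_lt_compat_r; auto. right; field; lra. }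
  assert (0 <= Rabs et) by apply Rabs_pos. assert (0 <= Rabs (rr s)) by apply Rabs_pos. split.
  - replace (T s + rr s * et - t) with ((T s - t) + rr s * et) by ring. eapply Rle_lt_trans. apply Rabs_triang.
    rewrite Rabs_mult. assert (Rabs (rr s) * Rabs et <= Rabs (rr s) * Me) by (apply Rmult_le_compat_l; unfold Me; lra). lra.
  - intro i. replace (Y s i + rr s * e i - xs i) with ((Y s i - xs i) + rr s * e i) by ring. eapply Rle_lt_trans. apply Rabs_triang.
    rewrite Rabs_mult. specialize (HM i). specialize (A2 i).
    assert (Rabs (rr s) * Rabs (e i) <= Rabs (rr s) * Me) by (apply Rmult_le_compat_l; unfold Me; lra). lra.
Qed.

Lemma dpl_add_scal (g rr : R -> R) x l1 l2 d : derivable_pt_lim g x l1 -> derivable_pt_lim rr x l2 ->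
  derivable_pt_lim (fun s => g s + rr s * d) x (l1 + l2 * d).
Proof. intros H1 H2.
  assert (H3 := derivable_pt_lim_mult rr (fct_cte d) x l2 0 H2 (derivable_pt_lim_const d x)).
  assert (H4 := derivable_pt_lim_plus g (rr * fct_cte d)%F x l1 _ H1 H3).
  replace (l1 + (l2 * fct_cte d x + rr x * 0)) with (l1 + l2 * d) in H4 by (unfold fct_cte; ring).
  eapply dpl_ext. exact H4. intro s. unfold plus_fct, mult_fct, fct_cte. reflexivity.
Qed.

Lemma dpl_affine a c x : derivable_pt_lim (fun s => a + s * c) x c.
Proof.
  assert (H := dpl_add_scal (fct_cte a) id x 0 1 c (derivable_pt_lim_const a x) (derivable_pt_lim_id x)).
  replace (0 + 1 * c) with c in H by ring. eapply dpl_ext. exact H. intro s; reflexivity.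
Qed.

Lemma Dt_order0 n z t xs : jet_order 0 z -> Dt n z t xs = pt z t xs + xs 1%nat * px 0 z t xs.
Proof. intro Hz. unfold Dt. f_equal. induction n; simpl. reflexivity.
  rewrite IHn. rewrite (px_high 0 z (S n)) by (auto; lia). ring. Qed.

Lemma Inv_base U n z zeta rho phi0 lam t0 xs0 :
  wopen U -> Cl U z -> jet_order 0 z -> U t0 xs0 -> Dt n z t0 xs0 <> 0 ->
  rho t0 xs0 = - px 0 z t0 xs0 -> phi0 t0 xs0 = pt z t0 xs0 -> Inv n z zeta rho phi0 lam t0 xs0 0.
Proof.
  intros HU Hz Hoz Hu HD Hrho Hphi.
  set (rp := rho t0 xs0). set (php := phi0 t0 xs0). set (zt := pt z t0 xs0). set (zx := px 0 z t0 xs0).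
  set (T0 := fun s => t0 + s * rp).
  set (Y0 := fun s i => xs0 i + s * (if Nat.eqb i 0 then php else 0)).
  set (e := fun i : nat => if Nat.eqb i 0 then zx else 0).
  assert (HB : zt * zt + sum_f_R0 (fun i => px i z t0 xs0 * e i) 0 <> 0).
  { simpl. unfold e; simpl. fold zx. rewrite Dt_order0 in HD by auto. fold zt zx in HD.
    intro E. assert (zt = 0) by nra. assert (zx = 0) by nra. apply HD. rewrite H, H0. ring. }
  assert (HW : forall i, (i <= 0)%nat -> derivable_pt_lim (fun s => Y0 s i) 0 (if Nat.eqb i 0 then php else 0)).
  { intros i _. unfold Y0. apply dpl_affine. }
  assert (Hcc : curve_cont T0 Y0 t0 xs0).
  { intros eps Heps. set (Mp := Rabs rp + Rabs php + 1).
    assert (0 <= Rabs rp) by apply Rabs_pos. assert (0 <= Rabs php) by apply Rabs_pos.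
    exists (eps / Mp). split. apply Rdiv_lt_0_compat; unfold Mp; lra.
    intros s Hs. assert (0 <= Rabs s) by apply Rabs_pos.
    assert (Rabs s * Mp < eps).
    { apply Rlt_le_trans with (eps / Mp * Mp). apply Rmult_lt_compat_r; [unfold Mp; lra| exact Hs]. right; field; unfold Mp; lra. }
    unfold Mp in *. assert (0 <= Rabs s * (Rabs php + 1)) by (apply Rmult_le_pos; lra).
    assert (0 <= Rabs s * (Rabs rp + 1)) by (apply Rmult_le_pos; lra). split.
    - unfold T0. replace (t0 + s * rp - t0) with (s * rp) by ring. rewrite Rabs_mult. lra.
    - intro i. unfold Y0. replace (xs0 i + s * (if Nat.eqb i 0 then php else 0) - xs0 i) with (s * (if Nat.eqb i 0 then php else 0)) by ring.
      rewrite Rabs_mult. destruct (Nat.eqb i 0). lra. rewrite Rabs_R0. lra. }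
  destruct (ift_step U z 0 t0 xs0 T0 Y0 rp (fun i => if Nat.eqb i 0 then php else 0) zt e (Rabs zx)
     HU Hz Hoz Hu ltac:(unfold T0; ring) ltac:(intro i; unfold Y0; ring) (dpl_affine t0 rp 0) HW Hcc
     ltac:(intro i; unfold e; destruct (Nat.eqb i 0); [lra| rewrite Rabs_R0; apply Rabs_pos]) HB)
    as [rr [d1 [Hd1 [H1 [H2 H3]]]]].
  assert (HA : pt z t0 xs0 * rp + sum_f_R0 (fun i => px i z t0 xs0 * (if Nat.eqb i 0 then php else 0)) 0 = 0).
  { simpl. unfold rp, php. rewrite Hrho, Hphi. ring. }
  rewrite HA in H3. unfold Rdiv in H3. rewrite Ropp_0, Rmult_0_l in H3.
  exists (fun s => T0 s + rr s * zt), (fun s i => Y0 s i + rr s * e i). repeat split.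
  - unfold T0. rewrite H2. ring.
  - intro i. unfold Y0. rewrite H2. ring.
  - replace (rho t0 xs0) with (rp + 0 * zt) by (unfold rp; ring). apply dpl_add_scal; auto. apply dpl_affine.
  - intros i Hi. assert (i = 0%nat) by lia. subst. change (phi_lam n rho phi0 lam 0 t0 xs0) with php.
    replace php with (php + 0 * e 0%nat) by ring. apply dpl_add_scal; [apply (HW 0%nat); lia | exact H3].
  - intros i Hi s. unfold Y0, e. destruct (Nat.eqb_spec i 0). lia. ring.
  - apply (curve_cont_step T0 Y0 t0 xs0 rr zt e (Rabs zx) 0); auto.
    intro i; unfold e; destruct (Nat.eqb i 0); [lra| rewrite Rabs_R0; apply Rabs_pos].
  - exists d1. split; auto. intros s Hs. split. apply H1; auto. intros j Hj. lia.
Qed.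

Lemma Inv_step U n z zeta rho phi0 lam t0 xs0 k :
  wopen U -> Cl U z -> Cl U zeta -> Cl U rho -> Cl U phi0 -> Cl U lam -> jet_order 0 z -> jet_order 1 zeta ->
  (forall t xs, U t xs -> px 1 zeta t xs <> 0) -> (forall t xs, U t xs -> Dt n z t xs <> 0) ->
  U t0 xs0 -> (k < n)%nat ->
  lam_prol n rho phi0 lam n (zeta_seq n z zeta k) t0 xs0 = 0 ->
  Inv n z zeta rho phi0 lam t0 xs0 k -> Inv n z zeta rho phi0 lam t0 xs0 (S k).
Proof.
  intros HU Hz Hze Hrho Hphi Hlam Hoz Hoze H1z HDz Hu Hk HX
    [T [Y [HT0 [HY0 [HT [HY [Hfar [Hcc [del [Hdel Hinv]]]]]]]]]].
  set (Zk := zeta_seq n z zeta k) in *.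
  assert (CZ : Cl U Zk) by (apply Z_Cl; auto).
  assert (HoZ : jet_order (S k) Zk) by (apply Z_order; auto).
  set (P := fun i => phi_lam n rho phi0 lam i t0 xs0).
  set (W := fun i => if Nat.leb i k then P i else 0).
  set (e := fun i : nat => if Nat.eqb i (S k) then 1 else 0).
  assert (HWd : forall i, (i <= S k)%nat -> derivable_pt_lim (fun s => Y s i) 0 (W i)).
  { intros i Hi. unfold W. destruct (Nat.leb_spec i k).
    - apply HY; auto.
    - assert (i = S k) by lia. subst. eapply dpl_ext. apply (derivable_pt_lim_const (xs0 (S k))).
      intro s. unfold fct_cte. rewrite Hfar; auto. }
  assert (Esum : forall a : nat -> R, sum_f_R0 (fun i => a i * e i) (S k) = a (S k)).
  { intro a. simpl. unfold e at 2. rewrite Nat.eqb_refl.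
    rewrite (sum_zero (fun i => a i * e i) k). ring. intros i Hi. unfold e. destruct (Nat.eqb_spec i (S k)). lia. ring. }
  assert (HB : pt Zk t0 xs0 * 0 + sum_f_R0 (fun i => px i Zk t0 xs0 * e i) (S k) <> 0).
  { rewrite Esum. rewrite Rmult_0_r, Rplus_0_l. apply (Z_nz U); auto. }
  destruct (ift_step U Zk (S k) t0 xs0 T Y (rho t0 xs0) W 0 e 1 HU CZ HoZ Hu HT0 HY0 HT HWd Hcc
     ltac:(intro i; unfold e; destruct (Nat.eqb i (S k)); rewrite ?Rabs_R1, ?Rabs_R0; lra) HB)
    as [rr [d1 [Hd1 [H1 [H2 H3]]]]].
  rewrite Esum in H3. rewrite Rmult_0_r, Rplus_0_l in H3.
  assert (HX' : rho t0 xs0 * pt Zk t0 xs0 + sum_f_R0 (fun i => P i * px i Zk t0 xs0) k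
                + P (S k) * px (S k) Zk t0 xs0 = 0).
  { assert (E := LP_order n rho phi0 lam (S k) (n - S k) Zk (S k) t0 xs0 HoZ (le_n _)).
    replace (S k + (n - S k))%nat with n in E by lia. rewrite <- E in HX.
    unfold lam_prol in HX. rewrite tech5 in HX. unfold P. lra. }
  assert (HA : pt Zk t0 xs0 * rho t0 xs0 + sum_f_R0 (fun i => px i Zk t0 xs0 * W i) (S k)
               = - P (S k) * px (S k) Zk t0 xs0).
  { simpl. unfold W at 2. rewrite (proj2 (Nat.leb_nle (S k) k)) by lia.
    rewrite (sum_eq (fun i => px i Zk t0 xs0 * W i) (fun i => P i * px i Zk t0 xs0)).
    2:{ intros i Hi. unfold W. rewrite (proj2 (Nat.leb_le i k)) by lia. ring. }
    lra. }
  rewrite HA in H3.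
  assert (HBnz : px (S k) Zk t0 xs0 <> 0) by (apply (Z_nz U); auto).
  replace (- (- P (S k) * px (S k) Zk t0 xs0) / px (S k) Zk t0 xs0) with (P (S k)) in H3 by (field; auto).
  exists (fun s => T s + rr s * 0), (fun s i => Y s i + rr s * e i). repeat split.
  - rewrite H2. lra.
  - intro i. rewrite H2, HY0. ring.
  - replace (rho t0 xs0) with (rho t0 xs0 + P (S k) * 0) by ring. apply dpl_add_scal; auto.
  - intros i Hi. destruct (Nat.eq_dec i (S k)).
    + subst i. replace (phi_lam n rho phi0 lam (S k) t0 xs0) with (W (S k) + P (S k) * e (S k)).
      apply dpl_add_scal; auto. unfold W, e. rewrite (proj2 (Nat.leb_nle (S k) k)) by lia. rewrite Nat.eqb_refl. unfold P. ring.
    + replace (phi_lam n rho phi0 lam i t0 xs0) with (W i + P (S k) * e i).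
      apply dpl_add_scal; auto. unfold W, e. rewrite (proj2 (Nat.leb_le i k)) by lia.
      destruct (Nat.eqb_spec i (S k)); [lia|]. unfold P. ring.
  - intros i Hi s. unfold e. destruct (Nat.eqb_spec i (S k)). lia. rewrite Hfar by lia. ring.
  - apply (curve_cont_step T Y t0 xs0 rr 0 e 1 (P (S k))); auto.
    intro i; unfold e; destruct (Nat.eqb i (S k)); rewrite ?Rabs_R1, ?Rabs_R0; lra.
  - exists (Rmin del d1). split. apply Rmin_pos; auto. intros s Hs.
    assert (Hs1 : Rabs s < del) by (eapply Rlt_le_trans; [exact Hs| apply Rmin_l]).
    assert (Hs2 : Rabs s < d1) by (eapply Rlt_le_trans; [exact Hs| apply Rmin_r]).
    destruct (Hinv s Hs1) as [Iz Izj].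
    assert (ET : T s + rr s * 0 = T s) by ring.
    split.
    + rewrite ET. rewrite <- Iz. apply Hoz. intros i Hi. assert (i = 0%nat) by lia. subst. unfold e. simpl. ring.
    + intros j Hj. destruct (Nat.eq_dec j k).
      * subst j. apply H1; auto.
      * rewrite ET. rewrite <- (Izj j) by lia. apply (Z_order n z zeta j Hoz Hoze). intros i Hi.
        unfold e. destruct (Nat.eqb_spec i (S k)). lia. ring.
Qed.

Lemma Dt_neg U K g t xs : wopen U -> Cl U g -> U t xs ->
  Dt K (fun t xs => - g t xs) t xs = - Dt K g t xs.
Proof. intros HU Hg Hu.
  assert (Hn : forall cc, pd cc (fun t xs => - g t xs) t xs = - pd cc g t xs).
  { intro cc. rewrite (pd_ext U _ (fun t xs => (fun _ _ => -1) t xs * g t xs) cc t xs HU) by (first [assumption| intros; cbv beta; ring]).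
    rewrite (pd_mult U) by (auto; apply ClC). rewrite pd_const. ring. }
  unfold Dt. rewrite (Hn None : pt _ t xs = - pt g t xs). rewrite Ropp_plus_distr. f_equal.
  induction K; simpl.
  - rewrite (Hn (Some 0%nat) : px 0 _ t xs = - px 0 g t xs). ring.
  - rewrite IHK. rewrite (Hn (Some (S K)) : px (S K) _ t xs = - px (S K) g t xs). ring.
Qed.

Lemma small_zero a : (forall eps, 0 < eps -> Rabs a <= eps) -> a = 0.
Proof. intro H. destruct (Req_dec a 0); auto. exfalso.
  assert (0 < Rabs a) by (apply Rabs_pos_lt; auto). specialize (H (Rabs a / 2) ltac:(lra)). lra. Qed.

Theorem theorem2p2
  (n : nat) (Hn : (2 <= n)%nat)
  (U : R -> (nat -> R) -> Prop) (HU : open_jet n U)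
  (F z zeta : Jet) (Delta : R -> (nat -> R) -> R)
  (HFo : jet_order (n - 1) F) (HFs : smooth_on U F)
  (Hzo : jet_order 0 z) (Hzs : smooth_on U z)
  (Hzeo : jet_order 1 zeta) (Hzes : smooth_on U zeta)
  (HDo : jet_order (n - 1) Delta) (HDs : smooth_on (fun _ _ => True) Delta)
  (Hzeta1 : forall t xs, U t xs -> px 1 zeta t xs <> 0)
  (HDtz : forall t xs, U t xs -> Dt n z t xs <> 0)
  (Hcoinc : forall t xs, U t xs ->
     (xs n = F t xs <-> Delta (z t xs) (fun i => zeta_seq n z zeta i t xs) = 0)) :
  let rho : Jet := fun t xs => - px 0 z t xs in
  let phi0 : Jet := fun t xs => pt z t xs in
  let lam : Jet := fun t xs =>
      (px 0 z t xs * pt zeta t xs - pt z t xs * px 0 zeta t xs)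
        / (Dt n z t xs * px 1 zeta t xs)
      - (Dt n (pt z) t xs + Dt n (px 0 z) t xs * xs 1%nat) / Dt n z t xs in
  (forall t xs, U t xs -> xs n = F t xs ->
     lam_prol n rho phi0 lam n (fun t' ys => ys n - F t' ys) t xs = 0)
  /\ (forall t xs, U t xs -> lam_prol n rho phi0 lam 1 z t xs = 0)
  /\ (forall t xs, U t xs -> lam_prol n rho phi0 lam 1 zeta t xs = 0).
Proof.
  intros rho phi0 lam.
  assert (HW := open_wopen n U HU).
  assert (Cz : Cl U z) by (apply ClB; auto).
  assert (Cze : Cl U zeta) by (apply ClB; auto).
  assert (CF : Cl U F) by (apply ClB; auto).
  assert (Crho : Cl U rho).
  { apply (ClE U (fun t xs => (fun _ _ => -1) t xs * pd (Some 0%nat) z t xs)).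
    apply ClM. apply ClC. apply Cl_pd; auto. intros; unfold rho; simpl; ring. }
  assert (Cphi : Cl U phi0) by (apply (ClE U (pd None z)); [apply Cl_pd; auto| intros; reflexivity]).
  assert (CDz : Cl U (Dt n z)) by (apply Cl_Dt; auto).
  assert (Clam : Cl U lam).
  { apply (ClE U (fun t xs =>
       (fun t xs => (fun t xs => pd (Some 0%nat) z t xs * pd None zeta t xs - pd None z t xs * pd (Some 0%nat) zeta t xs) t xs
          * / (fun t xs => Dt n z t xs * pd (Some 1%nat) zeta t xs) t xs) t xs
     - (fun t xs => (fun t xs => Dt n (pd None z) t xs + Dt n (pd (Some 0%nat) z) t xs * xs 1%nat) t xs * / Dt n z t xs) t xs)).
    - apply Cl_minus; apply ClM.
      + apply Cl_minus; apply ClM; apply Cl_pd; auto.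
      + apply ClI. apply ClM; [exact CDz| apply Cl_pd; auto].
        intros t xs Hu. apply Rmult_integral_contrapositive. split. auto. exact (Hzeta1 t xs Hu).
      + assert (Cl U (pd None z)) by (apply Cl_pd; auto).
        assert (Cl U (pd (Some 0%nat) z)) by (apply Cl_pd; auto).
        apply ClP. apply Cl_Dt; auto. apply ClM. apply Cl_Dt; auto. apply ClX.
      + apply ClI; auto.
    - intros t xs Hu. unfold lam, Rdiv. reflexivity. }
  assert (P2 : forall t xs, U t xs -> lam_prol n rho phi0 lam 1 z t xs = 0).
  { intros t xs Hu. unfold lam_prol. simpl. rewrite (px_high 0 z 1) by (auto; lia).
    unfold rho, phi0. ring. }
  assert (P3 : forall t xs, U t xs -> lam_prol n rho phi0 lam 1 zeta t xs = 0).
  { intros t xs Hu. unfold lam_prol. simpl.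
    change (Dt n phi0 t xs) with (Dt n (pt z) t xs).
    assert (ER : Dt n rho t xs = - Dt n (px 0 z) t xs).
    { apply (Dt_neg U n (px 0 z) t xs HW); auto. apply (Cl_pd U z (Some 0%nat)); auto. }
    rewrite ER. unfold lam. rewrite (Dt_order0 n z t xs Hzo). unfold rho, phi0.
    assert (D0 : pt z t xs + xs 1%nat * px 0 z t xs <> 0) by (rewrite <- (Dt_order0 n z t xs Hzo); auto).
    assert (Z1 := Hzeta1 t xs Hu).
    field. auto. }
  assert (XZ : forall t xs, U t xs -> lam_prol n rho phi0 lam n z t xs = 0).
  { intros t xs Hu. assert (E := LP_order n rho phi0 lam 1 (n - 1) z 0 t xs Hzo ltac:(lia)).
    replace (1 + (n - 1))%nat with n in E by lia. rewrite <- E. auto. }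
  assert (XZe : forall t xs, U t xs -> lam_prol n rho phi0 lam n zeta t xs = 0).
  { intros t xs Hu. assert (E := LP_order n rho phi0 lam 1 (n - 1) zeta 1 t xs Hzeo ltac:(lia)).
    replace (1 + (n - 1))%nat with n in E by lia. rewrite <- E. auto. }
  assert (Zinv : forall k, (k < n)%nat -> forall t xs, U t xs ->
            lam_prol n rho phi0 lam n (zeta_seq n z zeta k) t xs = 0).
  { intros k Hk. apply (Z_inv U n rho phi0 lam z zeta k); auto. }
  split; [| split; auto].
  intros t0 xs0 Hu Heq.
  assert (HInv : forall k, (k <= n)%nat -> Inv n z zeta rho phi0 lam t0 xs0 k).
  { induction k; intro Hk.
    - apply (Inv_base U); auto.
    - apply (Inv_step U n z zeta rho phi0 lam t0 xs0 k); auto.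
      all: try lia. all: try (apply Zinv; auto; lia). all: try (apply IHk; lia). }
  destruct (HInv n (le_n n)) as [T [Y [HT0 [HY0 [HT [HY [Hfar [Hcc [del [Hdel Hinv]]]]]]]]]].
  set (h := fun t' ys => ys n - F t' ys).
  assert (Ch : Cl U h).
  { apply (ClE U (fun t xs => (fun _ xs => xs n) t xs + (fun t xs => (fun _ _ => -1) t xs * F t xs) t xs)).
    apply ClP. apply ClX. apply ClM; auto. apply ClC. intros; unfold h; simpl; ring. }
  assert (Hoh : jet_order n h).
  { intros t xs ys E. unfold h. rewrite (E n) by lia. rewrite (HFo t xs ys) by (intros; apply E; lia). reflexivity. }
  destruct (HW t0 xs0 Hu) as [dU [HdU HU0]].
  destruct (Hcc dU HdU) as [dc [Hdc Hcc2]].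
  assert (Hzero : forall s, Rabs s < Rmin del dc -> h (T s) (Y s) = 0).
  { intros s Hs. assert (Hs1 : Rabs s < del) by (eapply Rlt_le_trans; [exact Hs| apply Rmin_l]).
    assert (Hs2 : Rabs s < dc) by (eapply Rlt_le_trans; [exact Hs| apply Rmin_r]).
    destruct (Hcc2 s Hs2) as [C1 C2].
    assert (Hq : U (T s) (Y s)) by (apply HU0; auto).
    destruct (Hinv s Hs1) as [Iz Ij].
    assert (D0 : Delta (z t0 xs0) (fun i => zeta_seq n z zeta i t0 xs0) = 0) by (apply Hcoinc; auto).
    assert (D1 : Delta (z (T s) (Y s)) (fun i => zeta_seq n z zeta i (T s) (Y s)) = 0).
    { rewrite Iz. rewrite <- D0. apply HDo. intros i Hi. apply Ij. lia. }
    apply Hcoinc in D1; auto. unfold h. rewrite D1. ring. }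
  apply small_zero. intros eps Heps.
  destruct (curveF U h n t0 xs0 T Y (rho t0 xs0) (fun i => phi_lam n rho phi0 lam i t0 xs0) 0 (fun _ => 0)
     HW Ch Hoh Hu HT0 HY0 HT HY eps Heps) as [d2 [Hd2 Hc]].
  set (s := Rmin (Rmin del dc) d2 / 2).
  assert (Hm : 0 < Rmin (Rmin del dc) d2) by (apply Rmin_pos; auto; apply Rmin_pos; auto).
  assert (Hs : 0 < s) by (unfold s; lra).
  assert (Hs1 : Rabs s < Rmin del dc).
  { rewrite Rabs_right by lra. assert (Rmin (Rmin del dc) d2 <= Rmin del dc) by apply Rmin_l. unfold s; lra. }
  assert (Hs2 : Rabs s < d2).
  { rewrite Rabs_right by lra. assert (Rmin (Rmin del dc) d2 <= d2) by apply Rmin_r. unfold s; lra. }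
  specialize (Hc s 0 Hs2 ltac:(rewrite Rabs_R0; auto)).
  cbv beta in Hc.
  assert (EY : h (T s + 0 * 0) (fun i => Y s i + 0 * 0) = h (T s) (Y s)).
  { f_equal. ring. apply functional_extensionality; intro i; ring. }
  rewrite EY in Hc. rewrite (Hzero s Hs1) in Hc.
  assert (Hh0 : h t0 xs0 = 0) by (unfold h; rewrite Heq; ring). rewrite Hh0 in Hc.
  rewrite Rabs_R0, Rplus_0_r in Hc.
  replace (0 - 0 - (pt h t0 xs0 * rho t0 xs0 + sum_f_R0 (fun i => px i h t0 xs0 * phi_lam n rho phi0 lam i t0 xs0) n) * s
            - (pt h t0 xs0 * 0 + sum_f_R0 (fun i => px i h t0 xs0 * 0) n) * 0)
    with (- (lam_prol n rho phi0 lam n h t0 xs0 * s)) in Hc.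
  2:{ unfold lam_prol. rewrite (sum_eq (fun i => px i h t0 xs0 * phi_lam n rho phi0 lam i t0 xs0)
          (fun i => phi_lam n rho phi0 lam i t0 xs0 * px i h t0 xs0)) by (intros; ring). ring. }
  rewrite Rabs_Ropp, Rabs_mult in Hc. rewrite (Rabs_right s) in Hc by lra.
  fold h. apply Rmult_le_reg_r with s; auto.
Qed.
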